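(* The class of $\mathbb{R}$-forests (with isometric embeddings) has the joint embedding property and the amalgamation property.
   Context: An $\mathbb{R}$-forest is a complete extended ($[0,\infty]$-valued) metric space $(X,d)$ such that for every $x\in X$, $\{y:d(x,y)<\infty\}$ is an $\mathbb{R}$-tree (a uniquely arc-connected complete metric space whose arcs $[x,y]$ are isometric to $[0,d(x,y)]$). *)

(* Defs.v *)
From Stdlib Require Import Reals.
From Coquelicot Require Import Rbar.
Open Scope R_scope.

Definition is_ext_metric (X : Type) (d : X -> X -> Rbar) : Prop :=
  (forall x y, Rbar_le (Finite 0) (d x y)) /\
  (forall x y, d x y = Finite 0 <-> x = y) /\
  (forall x y, d x y = d y x) /\
  (forall x y z, Rbar_le (d x z) (Rbar_plus (d x y) (d y z))).

Definition cauchy_seq (X : Type) (d : X -> X -> Rbar) (u : nat -> X) : Prop :=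
  forall eps : R, 0 < eps -> exists N : nat, forall n m : nat,
    (N <= n)%nat -> (N <= m)%nat -> Rbar_lt (d (u n) (u m)) (Finite eps).

Definition seq_converges_to (X : Type) (d : X -> X -> Rbar) (u : nat -> X) (l : X) : Prop :=
  forall eps : R, 0 < eps -> exists N : nat, forall n : nat,
    (N <= n)%nat -> Rbar_lt (d (u n) l) (Finite eps).

Definition complete_on (X : Type) (d : X -> X -> Rbar) (S : X -> Prop) : Prop :=
  forall u : nat -> X, (forall n, S (u n)) -> cauchy_seq X d u ->
    exists l, S l /\ seq_converges_to X d u l.

Definition is_arc_path (X : Type) (d : X -> X -> Rbar) (S : X -> Prop)
    (y z : X) (gamma : R -> X) : Prop :=
  (forall t, 0 <= t <= 1 -> S (gamma t)) /\
  gamma 0 = y /\ gamma 1 = z /\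
  (forall s t, 0 <= s <= 1 -> 0 <= t <= 1 -> gamma s = gamma t -> s = t) /\
  (forall t, 0 <= t <= 1 -> forall eps, 0 < eps -> exists delta, 0 < delta /\
     forall s, 0 <= s <= 1 -> Rabs (s - t) < delta ->
       Rbar_lt (d (gamma s) (gamma t)) (Finite eps)).


(* The subset S, with the restriction of d (assumed finite on S),
   is an R-tree: complete, uniquely arc-connected, and every arc [y,z]
   is isometric to the real interval [0, d(y,z)]. *)
Definition is_Rtree_on (X : Type) (d : X -> X -> Rbar) (S : X -> Prop) : Prop :=
  complete_on X d S /\
  (forall y z, S y -> S z -> y <> z ->
     (exists gamma, is_arc_path X d S y z gamma) /\
     (forall g1 g2, is_arc_path X d S y z g1 -> is_arc_path X d S y z g2 ->
        forall p, (exists t, 0 <= t <= 1 /\ g1 t = p) <->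
                  (exists t, 0 <= t <= 1 /\ g2 t = p)) /\
     (forall gamma, is_arc_path X d S y z gamma ->
        exists (D : R) (phi : R -> X),
          d y z = Finite D /\
          (forall s t, 0 <= s <= D -> 0 <= t <= D ->
             d (phi s) (phi t) = Finite (Rabs (s - t))) /\
          (forall p, (exists t, 0 <= t <= 1 /\ gamma t = p) <->
                     (exists s, 0 <= s <= D /\ phi s = p)))).

Definition is_Rforest (X : Type) (d : X -> X -> Rbar) : Prop :=
  is_ext_metric X d /\
  complete_on X d (fun _ => True) /\
  (forall x : X, is_Rtree_on X d (fun y => Rbar_lt (d x y) p_infty)).

Definition isometric_embedding (X Y : Type) (dX : X -> X -> Rbar)
    (dY : Y -> Y -> Rbar) (f : X -> Y) : Prop :=
  forall a b, dY (f a) (f b) = dX a b.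

(* Main.v *)
Require Import Defs.
From Stdlib Require Import Reals Lra Lia Classical ClassicalEpsilon ProofIrrelevance FunctionalExtensionality PropExtensionality.
From Coquelicot Require Import Rbar.
Open Scope R_scope.

Section MK.
Context {X : Type} (d : X -> X -> Rbar) (Hm : is_ext_metric X d).

Definition fin x y := d x y <> p_infty.
Definition dr x y : R := real (d x y).

Lemma d_not_minf x y : d x y <> m_infty.
Proof. destruct Hm as [H0 _]. intro E. specialize (H0 x y). rewrite E in H0. exact H0. Qed.

Lemma d_fin x y : fin x y -> d x y = Finite (dr x y).
Proof. unfold fin, dr. intro H. generalize (d_not_minf x y). destruct (d x y); simpl; congruence. Qed.

Lemma fin_of x y r : d x y = Finite r -> fin x y /\ dr x y = r.
Proof. unfold fin, dr. intro E; rewrite E; simpl; split; congruence. Qed.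

Lemma fin_lt x y : Rbar_lt (d x y) p_infty <-> fin x y.
Proof. unfold fin. generalize (d_not_minf x y). destruct (d x y); simpl; split; intros; try congruence; tauto. Qed.

Lemma dr_nonneg x y : 0 <= dr x y.
Proof. destruct Hm as [H0 _]. specialize (H0 x y). unfold dr. destruct (d x y); simpl in *; lra. Qed.

Lemma d_refl x : d x x = Finite 0.
Proof. destruct Hm as [_ [H _]]. apply H; reflexivity. Qed.

Lemma fin_refl x : fin x x.
Proof. unfold fin; rewrite d_refl; congruence. Qed.

Lemma dr_refl x : dr x x = 0.
Proof. unfold dr; rewrite d_refl; reflexivity. Qed.

Lemma d_sym x y : d x y = d y x.
Proof. destruct Hm as [_ [_ [H _]]]. apply H. Qed.

Lemma fin_sym x y : fin x y -> fin y x.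
Proof. unfold fin; rewrite d_sym; auto. Qed.

Lemma dr_sym x y : dr x y = dr y x.
Proof. unfold dr; rewrite d_sym; auto. Qed.

Lemma fin_trans x y z : fin x y -> fin y z -> fin x z.
Proof.
  intros H1 H2. destruct Hm as [_ [_ [_ Ht]]]. specialize (Ht x y z).
  rewrite (d_fin _ _ H1), (d_fin _ _ H2) in Ht. simpl in Ht.
  unfold fin. intro E; rewrite E in Ht; simpl in Ht; exact Ht.
Qed.

Lemma dr_tri x y z : fin x y -> fin y z -> dr x z <= dr x y + dr y z.
Proof.
  intros H1 H2. destruct Hm as [_ [_ [_ Ht]]]. specialize (Ht x y z).
  rewrite (d_fin _ _ H1), (d_fin _ _ H2) in Ht. rewrite (d_fin _ _ (fin_trans _ _ _ H1 H2)) in Ht.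
  simpl in Ht. exact Ht.
Qed.

Lemma dr_eq0 x y : fin x y -> dr x y = 0 -> x = y.
Proof. intros H E. destruct Hm as [_ [H0 _]]. apply H0. rewrite d_fin by auto. rewrite E; reflexivity. Qed.

Lemma lt_fin x y e : fin x y -> (Rbar_lt (d x y) (Finite e) <-> dr x y < e).
Proof. intro H. rewrite (d_fin _ _ H). simpl. tauto. Qed.

Definition gp y a b := (dr y a + dr y b - dr a b) / 2.

Lemma gp_sym y a b : gp y a b = gp y b a.
Proof. unfold gp. rewrite (dr_sym a b). lra. Qed.

Lemma gp_le y a b : fin y a -> fin y b -> gp y a b <= dr y a.
Proof. intros. unfold gp. assert (dr y b <= dr y a + dr a b) by (apply dr_tri; auto; apply (fin_trans _ y); [apply fin_sym|]; auto). lra. Qed.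

Lemma gp_ge0 y a b : fin y a -> fin y b -> 0 <= gp y a b.
Proof. intros. unfold gp. assert (dr a b <= dr a y + dr y b) by (apply dr_tri; auto; apply fin_sym; auto).
  rewrite (dr_sym a y) in H1. lra. Qed.

Lemma gp_lip y a b w : fin y a -> fin y b -> fin y w -> Rabs (gp y a w - gp y b w) <= dr a b.
Proof.
  intros. unfold gp.
  assert (fa : fin a y) by (apply fin_sym; auto).
  assert (fb : fin b y) by (apply fin_sym; auto).
  assert (dr y a <= dr y b + dr b a) by (apply dr_tri; auto; apply (fin_trans _ y); auto).
  assert (dr y b <= dr y a + dr a b) by (apply dr_tri; auto; apply (fin_trans _ y); auto).
  assert (dr a w <= dr a b + dr b w) by (apply dr_tri; [apply (fin_trans _ y)|apply (fin_trans _ y)]; auto).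
  assert (dr b w <= dr b a + dr a w) by (apply dr_tri; [apply (fin_trans _ y)|apply (fin_trans _ y)]; auto).
  rewrite (dr_sym b a) in *. apply Rabs_le; lra.
Qed.

End MK.

Definition contR (F : R -> R) (a b : R) := forall t, a <= t <= b -> forall eps, 0 < eps ->
  exists delta, 0 < delta /\ forall s, a <= s <= b -> Rabs (s - t) < delta -> Rabs (F s - F t) < eps.

Lemma eq_of_close x s : (forall eps, 0 < eps -> Rabs (x - s) < eps) -> x = s.
Proof.
  intro H. destruct (Req_dec x s) as [|Hn]; auto.
  assert (0 < Rabs (x - s)) by (apply Rabs_pos_lt; lra).
  specialize (H _ H0). lra.
Qed.

Lemma first_hit F a b s : a <= b -> contR F a b -> F a > s -> F b <= s ->
  exists t, a < t <= b /\ F t = s /\ forall u, a <= u < t -> F u > s.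
Proof.
  intros Hab Hc Ha Hb.
  set (E := fun u => a <= u <= b /\ forall v, a <= v <= u -> F v > s).
  assert (bE : bound E) by (exists b; intros u [[? ?] _]; auto).
  assert (nE : exists x, E x) by (exists a; split; [lra| intros v Hv; replace v with a by lra; auto]).
  destruct (completeness E bE nE) as [t [Hub Hlub]].
  assert (Hta : a <= t) by (apply Hub; destruct nE; unfold E; split; [lra| intros v Hv; replace v with a by lra; auto]).
  assert (Htb : t <= b) by (apply Hlub; intros u [[? ?] _]; auto).
  assert (Hbelow : forall u, a <= u < t -> F u > s).
  { intros u Hu. destruct (classic (exists v, E v /\ u <= v)) as [[v [[Hv1 Hv2] Huv]]|Hn].
    - apply Hv2; lra.
    - exfalso. assert (is_upper_bound E u).
      { intros v Ev. destruct (Rle_dec v u); auto. exfalso; apply Hn; exists v; split; auto; lra. }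
      specialize (Hlub _ H); lra. }
  assert (HFt : F t <= s).
  { destruct (Rle_dec (F t) s) as [|Hgt]; auto. exfalso. apply Rnot_le_lt in Hgt.
    destruct (Req_dec t b) as [Etb|Ntb]. { subst t. lra. }
    destruct (Hc t (conj Hta Htb) (F t - s)) as [dl [Hdl Hd]]; [lra|].
    set (t' := Rmin (t + dl/2) b).
    assert (Ht' : t < t') by (unfold t'; apply Rmin_case; lra).
    assert (Ht'b : t' <= b) by (unfold t'; apply Rmin_r).
    assert (E t').
    { split; [lra|]. intros v Hv. destruct (Rlt_le_dec v t).
      - apply Hbelow; lra.
      - assert (Rabs (F v - F t) < F t - s).
        { apply Hd; [lra|]. assert (t' <= t + dl/2) by apply Rmin_l. apply Rabs_def1; lra. }
        apply Rabs_def2 in H. lra. }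
    specialize (Hub _ H). lra. }
  assert (Hat : a < t). { destruct (Req_dec a t); [subst; lra|lra]. }
  exists t. split; [lra|]. split; [|auto].
  apply eq_of_close. intros eps Heps.
  destruct (Hc t (conj Hta Htb) eps Heps) as [dl [Hdl Hd]].
  set (u := Rmax a (t - dl/2)).
  assert (Hu1 : a <= u) by apply Rmax_l.
  assert (Hu2 : u < t) by (unfold u; apply Rmax_case; lra).
  assert (Hu3 : t - dl/2 <= u) by apply Rmax_r.
  assert (Rabs (F u - F t) < eps) by (apply Hd; [lra| apply Rabs_def1; lra]).
  specialize (Hbelow u (conj Hu1 Hu2)). apply Rabs_def2 in H. apply Rabs_def1; lra.
Qed.

Lemma contR_rev F a b : contR F a b -> contR (fun u => F (a + b - u)) a b.
Proof.
  intros Hc t Ht eps Heps. destruct (Hc (a + b - t) ltac:(lra) eps Heps) as [dl [Hdl Hd]].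
  exists dl; split; auto. intros s Hs Hst. apply Hd; [lra|].
  replace (a + b - s - (a + b - t)) with (- (s - t)) by ring. rewrite Rabs_Ropp; auto.
Qed.

Lemma last_hit F a b s : a <= b -> contR F a b -> F a <= s -> F b > s ->
  exists t, a <= t < b /\ F t = s /\ forall u, t < u <= b -> F u > s.
Proof.
  intros Hab Hc Ha Hb.
  destruct (first_hit (fun u => F (a + b - u)) a b s Hab (contR_rev F a b Hc)) as [t [Ht [Hft Hu]]].
  - replace (a + b - a) with b by ring; auto.
  - replace (a + b - b) with a by ring; auto.
  - exists (a + b - t). split; [lra|]. split; auto.
    intros u Hu'. replace u with (a + b - (a + b - u)) by ring. apply Hu; lra.
Qed.

Lemma glb_exists (V : R -> Prop) : (exists v, V v) -> (forall v, V v -> 0 <= v) ->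
  exists m, (forall v, V v -> m <= v) /\ (forall eps, 0 < eps -> exists v, V v /\ v < m + eps).
Proof.
  intros [v0 Hv0] Hpos.
  set (E := fun x => V (- x)).
  assert (bE : bound E) by (exists 0; intros x Ex; specialize (Hpos _ Ex); lra).
  assert (nE : exists x, E x) by (exists (- v0); unfold E; rewrite Ropp_involutive; auto).
  destruct (completeness E bE nE) as [M [Hub Hlub]].
  exists (- M). split.
  - intros v Hv. assert (E (- v)) by (unfold E; rewrite Ropp_involutive; auto). specialize (Hub _ H); lra.
  - intros eps Heps. destruct (classic (exists v, V v /\ v < - M + eps)) as [|Hn]; auto.
    exfalso. assert (is_upper_bound E (M - eps)).
    { intros x Ex. destruct (Rle_dec x (M - eps)); auto. exfalso; apply Hn. exists (- x). split; auto; lra. }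
    specialize (Hlub _ H). lra.
Qed.

Definition FPs (P Q R : R) := (P <= Q \/ P <= R) /\ (Q <= P \/ Q <= R) /\ (R <= P \/ R <= Q).

Definition Geo {X} (d : X -> X -> Rbar) (S : X -> Prop) := forall y z, S y -> S z ->
  exists phi : R -> X, phi 0 = y /\ phi (dr d y z) = z /\
    forall s t, 0 <= s <= dr d y z -> 0 <= t <= dr d y z -> d (phi s) (phi t) = Finite (Rabs (s - t)).

Definition FP {X} (d : X -> X -> Rbar) (S : X -> Prop) := forall x y z w, S x -> S y -> S z -> S w ->
  FPs (dr d x y + dr d z w) (dr d x z + dr d y w) (dr d x w + dr d y z).

Lemma contR_sub F a b a' b' : contR F a b -> a <= a' -> b' <= b -> contR F a' b'.
Proof. intros Hc Ha Hb t Ht eps He. destruct (Hc t ltac:(lra) eps He) as [dl [Hdl Hd]].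
  exists dl; split; auto. intros; apply Hd; auto; lra. Qed.

Section T1.
Context {X : Type} (d : X -> X -> Rbar) (Hm : is_ext_metric X d) (x0 : X).
Let S := fun y => fin d x0 y.
Context (Hfp : FP d S).

Lemma Sfin a b : S a -> S b -> fin d a b.
Proof. intros. apply (fin_trans d Hm _ x0); auto. apply fin_sym; auto. Qed.

Lemma S_of a b : S a -> fin d a b -> S b.
Proof. intros. apply (fin_trans d Hm _ a); auto. Qed.

Lemma gp_min y a b c : S y -> S a -> S b -> S c ->
  gp d y a b >= gp d y a c \/ gp d y a b >= gp d y c b.
Proof.
  intros. destruct (Hfp a b y c) as [[Ha|Ha] _]; auto; unfold gp;
  rewrite ?(dr_sym d Hm y a), ?(dr_sym d Hm b c), ?(dr_sym d Hm b y) in *; [right|left]; lra.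
Qed.

Lemma LC y q q' w : S y -> S q -> S q' -> S w ->
  dr d q q' < dr d y q - gp d y q w -> gp d y q' w = gp d y q w.
Proof.
  intros Sy Sq Sq' Sw H.
  assert (dr d y q <= dr d y q' + dr d q' q) by (apply (dr_tri d Hm); auto; apply Sfin; auto).
  assert (Hg : gp d y q' q > gp d y q w).
  { unfold gp in *. rewrite (dr_sym d Hm q q') in *. lra. }
  destruct (gp_min y q' w q) as [H1|H1]; auto;
  destruct (gp_min y q w q') as [H2|H2]; auto; pose proof (gp_sym d Hm y q q'); lra.
Qed.

Lemma Wlem y z q q'' : S y -> S z -> S q -> S q'' -> gp d y q'' q > gp d y q z -> gp d y q'' z = gp d y q z.
Proof.
  intros. destruct (gp_min y q'' z q) as [Ha|Ha]; auto;
  destruct (gp_min y q z q'') as [Hb|Hb]; auto; pose proof (gp_sym d Hm y q q''); lra.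
Qed.

Section Core.
Context (y z : X) (Sy : S y) (Sz : S z) (phi : R -> X) (Hp0 : phi 0 = y) (HpD : phi (dr d y z) = z)
  (Hiso : forall s t, 0 <= s <= dr d y z -> 0 <= t <= dr d y z -> d (phi s) (phi t) = Finite (Rabs (s - t))).
Local Notation D := (dr d y z).

Lemma phi_facts s : 0 <= s <= D -> fin d y (phi s) /\ dr d y (phi s) = s /\ dr d (phi s) z = D - s /\ S (phi s).
Proof.
  intro Hs. assert (HD : 0 <= D) by apply (dr_nonneg d Hm).
  destruct (fin_of d _ _ _ (Hiso 0 s ltac:(lra) Hs)) as [F1 E1].
  destruct (fin_of d _ _ _ (Hiso s D Hs ltac:(lra))) as [F2 E2].
  rewrite Hp0 in F1, E1. rewrite HpD in F2, E2.
  rewrite Rabs_left1 in E1 by lra. rewrite Rabs_left1 in E2 by lra.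
  repeat split; auto; try lra. apply (S_of y); auto.
Qed.

Lemma Ulem q : S q -> dr d y q = gp d y q z -> q = phi (gp d y q z).
Proof.
  intros Sq E. set (s := gp d y q z).
  assert (0 <= s) by (apply (gp_ge0 d Hm); auto; apply Sfin; auto).
  assert (s <= D).
  { unfold s, gp. assert (dr d y z <= dr d y q + dr d q z) by (apply (dr_tri d Hm); apply Sfin; auto).
    assert (dr d y q <= dr d y z + dr d z q) by (apply (dr_tri d Hm); apply Sfin; auto).
    rewrite (dr_sym d Hm z q) in *. lra. }
  destruct (phi_facts s ltac:(lra)) as [F1 [E1 [E2 Sp]]].
  assert (Hz : gp d y z (phi s) = s) by (unfold gp; rewrite E1, (dr_sym d Hm z (phi s)), E2; lra).
  apply (dr_eq0 d Hm); [apply Sfin; auto|].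
  pose proof (dr_nonneg d Hm q (phi s)).
  destruct (gp_min y q (phi s) z) as [Ha|Ha]; auto;
  [|rewrite Hz in Ha]; unfold gp at 1 in Ha; rewrite E1, E in Ha; change (gp d y q z) with s in Ha; lra.
Qed.

Section Arc.
Context (gamma : R -> X) (Harc : is_arc_path X d S y z gamma).

Lemma gS t : 0 <= t <= 1 -> S (gamma t).
Proof. destruct Harc as [H _]; auto. Qed.

Lemma g0 : gamma 0 = y. Proof. destruct Harc as [_ [H _]]; auto. Qed.
Lemma g1 : gamma 1 = z. Proof. destruct Harc as [_ [_ [H _]]]; auto. Qed.

Lemma gcont t : 0 <= t <= 1 -> forall eps, 0 < eps -> exists delta, 0 < delta /\
  forall s, 0 <= s <= 1 -> Rabs (s - t) < delta -> dr d (gamma s) (gamma t) < eps.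
Proof.
  intros Ht eps He. destruct Harc as [_ [_ [_ [_ Hc]]]].
  destruct (Hc t Ht eps He) as [dl [Hdl Hd]]. exists dl; split; auto.
  intros s Hs Hst. apply (lt_fin d Hm); [apply Sfin; apply gS; auto|]. apply Hd; auto.
Qed.

Lemma Fcont w : S w -> contR (fun u => gp d y (gamma u) w) 0 1.
Proof.
  intros Sw t Ht eps He. destruct (gcont t Ht eps He) as [dl [Hdl Hd]].
  exists dl; split; auto. intros s Hs Hst.
  eapply Rle_lt_trans; [apply (gp_lip d Hm); auto; apply Sfin; auto; apply gS; auto|]. apply Hd; auto.
Qed.

Lemma BP w t' : S w -> 0 <= t' <= 1 ->
  (forall delta, 0 < delta -> exists u, 0 <= u <= 1 /\ Rabs (u - t') < delta /\
       gp d y (gamma u) w > gp d y (gamma t') w) ->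
  dr d y (gamma t') = gp d y (gamma t') w.
Proof.
  intros Sw Ht H. pose proof (gp_le d Hm y (gamma t') w (Sfin _ _ Sy (gS _ Ht)) (Sfin _ _ Sy Sw)).
  destruct (Rle_lt_or_eq_dec _ _ H0) as [Hlt|]; auto. exfalso.
  destruct (gcont t' Ht (dr d y (gamma t') - gp d y (gamma t') w)) as [dl [Hdl Hd]]; [lra|].
  destruct (H dl Hdl) as [u [Hu [Hut Hg]]].
  specialize (Hd u Hu Hut).
  assert (gp d y (gamma u) w = gp d y (gamma t') w).
  { apply LC; auto; try apply gS; auto. rewrite (dr_sym d Hm); auto. }
  lra.
Qed.

Lemma BPP q t' : S q -> 0 <= t' <= 1 -> gp d y (gamma t') q = gp d y q z ->
  (forall delta, 0 < delta -> exists u, 0 <= u <= 1 /\ Rabs (u - t') < delta /\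
       gp d y (gamma u) q > gp d y q z) ->
  gamma t' = phi (gp d y q z).
Proof.
  intros Sq Ht E H.
  assert (E1 : dr d y (gamma t') = gp d y q z).
  { rewrite <- E. apply (BP q); auto. intros dl Hdl. destruct (H dl Hdl) as [u [? [? ?]]].
    exists u; repeat split; auto; lra. }
  assert (E2 : gp d y (gamma t') z = gp d y q z).
  { apply eq_of_close. intros eps He. destruct (Fcont z Sz t' Ht eps He) as [dl [Hdl Hd]].
    destruct (H dl Hdl) as [u [Hu [Hut Hg]]].
    specialize (Hd u Hu Hut). rewrite (Wlem y z q (gamma u)) in Hd; auto; try apply gS; auto.
    rewrite Rabs_minus_sym; auto. }
  rewrite <- E2. apply Ulem; [apply gS; auto|]. congruence.
Qed.

Lemma image_sub t0 : 0 <= t0 <= 1 -> gamma t0 = phi (gp d y (gamma t0) z).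
Proof.
  intros Ht0. set (q := gamma t0). assert (Sq : S q) by (apply gS; auto).
  set (s := gp d y q z).
  assert (Hs0 : 0 <= s) by (apply (gp_ge0 d Hm); auto; apply Sfin; auto).
  assert (Hle : s <= dr d y q) by (apply (gp_le d Hm); apply Sfin; auto).
  destruct (Rle_lt_or_eq_dec _ _ Hle) as [Hlt|E]; [|apply Ulem; auto].
  exfalso.
  set (F := fun u => gp d y (gamma u) q).
  assert (Fc : contR F 0 1) by (apply Fcont; auto).
  assert (Ft0 : F t0 = dr d y q) by (unfold F, gp; fold q; rewrite (dr_refl d Hm); lra).
  assert (F0 : F 0 = 0) by (unfold F, gp; rewrite g0, (dr_refl d Hm); lra).
  assert (F1 : F 1 = s) by (unfold F, s; rewrite g1; apply (gp_sym d Hm); auto).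
  destruct (first_hit F t0 1 s ltac:(lra) (contR_sub F 0 1 t0 1 Fc ltac:(lra) ltac:(lra)) ltac:(lra) ltac:(lra))
    as [t1 [Ht1 [Ft1 Hab1]]].
  destruct (last_hit F 0 t0 s ltac:(lra) (contR_sub F 0 1 0 t0 Fc ltac:(lra) ltac:(lra)) ltac:(lra) ltac:(lra))
    as [t2 [Ht2 [Ft2 Hab2]]].
  assert (P1 : gamma t1 = phi s).
  { apply BPP; auto; [lra|]. intros dl Hdl. exists (Rmax t0 (t1 - dl/2)).
    assert (t0 <= Rmax t0 (t1 - dl/2)) by apply Rmax_l.
    assert (t1 - dl/2 <= Rmax t0 (t1 - dl/2)) by apply Rmax_r.
    assert (Rmax t0 (t1 - dl/2) < t1) by (apply Rmax_case; lra).
    split; [lra|]. split; [apply Rabs_def1; lra|]. apply Hab1; lra. }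
  assert (P2 : gamma t2 = phi s).
  { apply BPP; auto; [lra|]. intros dl Hdl. exists (Rmin t0 (t2 + dl/2)).
    assert (Rmin t0 (t2 + dl/2) <= t0) by apply Rmin_l.
    assert (Rmin t0 (t2 + dl/2) <= t2 + dl/2) by apply Rmin_r.
    assert (t2 < Rmin t0 (t2 + dl/2)) by (apply Rmin_case; lra).
    split; [lra|]. split; [apply Rabs_def1; lra|]. apply Hab2; lra. }
  destruct Harc as [_ [_ [_ [Hinj _]]]].
  assert (t1 = t2) by (apply Hinj; [lra|lra|congruence]). lra.
Qed.

Lemma gp_range q : S q -> 0 <= gp d y q z <= D.
Proof.
  intros Sq. split; [apply (gp_ge0 d Hm); apply Sfin; auto|].
  unfold gp. assert (dr d y q <= dr d y z + dr d z q) by (apply (dr_tri d Hm); apply Sfin; auto).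
  rewrite (dr_sym d Hm z q) in *. lra.
Qed.

Lemma seg_sub s : 0 <= s <= D -> exists t, 0 <= t <= 1 /\ gamma t = phi s.
Proof.
  intros Hs. destruct (Req_dec s D) as [E|Hn].
  { exists 1; split; [lra|]. rewrite g1, E; auto. }
  set (F := fun u => gp d y (gamma u) z).
  assert (Fc : contR F 0 1) by (apply Fcont; auto).
  assert (F0 : F 0 = 0) by (unfold F, gp; rewrite g0, (dr_refl d Hm); lra).
  assert (F1 : F 1 = D) by (unfold F, gp; rewrite g1, (dr_refl d Hm); lra).
  destruct (last_hit F 0 1 s ltac:(lra) Fc ltac:(lra) ltac:(lra)) as [t [Ht [Ft Hab]]].
  exists t. split; [lra|].
  assert (E1 : dr d y (gamma t) = gp d y (gamma t) z).
  { apply BP; auto; [lra|]. intros dl Hdl. exists (Rmin 1 (t + dl/2)).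
    assert (Rmin 1 (t + dl/2) <= 1) by apply Rmin_l.
    assert (Rmin 1 (t + dl/2) <= t + dl/2) by apply Rmin_r.
    assert (t < Rmin 1 (t + dl/2)) by (apply Rmin_case; lra).
    split; [lra|]. split; [apply Rabs_def1; lra|]. fold (F t). rewrite Ft. apply Hab; lra. }
  rewrite (Ulem (gamma t)); [|apply gS; lra|auto]. fold (F t). rewrite Ft; auto.
Qed.

Lemma arc_image p : (exists t, 0 <= t <= 1 /\ gamma t = p) <-> (exists s, 0 <= s <= D /\ phi s = p).
Proof.
  split.
  - intros [t [Ht E]]. exists (gp d y (gamma t) z). split; [apply gp_range; apply gS; auto|].
    rewrite <- image_sub; auto.
  - intros [s [Hs E]]. destruct (seg_sub s Hs) as [t [Ht E']]. exists t; split; congruence.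
Qed.
End Arc.
End Core.
End T1.

Lemma comp_eq {X} (d : X -> X -> Rbar) (Hm : is_ext_metric X d) x0 :
  (fun y => Rbar_lt (d x0 y) p_infty) = fin d x0.
Proof. apply functional_extensionality; intro y. apply propositional_extensionality. apply fin_lt; auto. Qed.

Lemma geo_arc {X} (d : X -> X -> Rbar) (Hm : is_ext_metric X d) (S : X -> Prop) y z phi :
  S y -> (forall a b, S a -> fin d a b -> S b) -> y <> z -> phi 0 = y -> phi (dr d y z) = z ->
  (forall s t, 0 <= s <= dr d y z -> 0 <= t <= dr d y z -> d (phi s) (phi t) = Finite (Rabs (s - t))) ->
  is_arc_path X d S y z (fun u => phi (u * dr d y z)).
Proof.
  intros Sy Sof Hyz H0 HD Hiso. set (D := dr d y z) in *.
  assert (HD0 : 0 < D).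
  { assert (Hn : 0 <= D) by apply (dr_nonneg d Hm).
    destruct (Rle_lt_or_eq_dec _ _ Hn) as [|E0]; auto. exfalso; apply Hyz.
    assert (A0 : 0 <= 0 <= D) by lra. assert (A1 : 0 <= D <= D) by lra.
    destruct (fin_of d _ _ _ (Hiso 0 D A0 A1)) as [F1 _]. rewrite H0, HD in F1.
    apply (dr_eq0 d Hm); auto.
  }
  assert (Hm1 : forall u, 0 <= u <= 1 -> 0 <= u * D <= D) by (intros; split; nra).
  split; [|split; [|split; [|split]]].
  - intros t Ht. apply (Sof y); auto. assert (A0 : 0 <= 0 <= D) by lra.
    destruct (fin_of d _ _ _ (Hiso 0 (t * D) A0 (Hm1 t Ht))). congruence.
  - rewrite Rmult_0_l; auto.
  - rewrite Rmult_1_l; auto.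
  - intros s t Hs Ht E. pose proof (Hiso _ _ (Hm1 s Hs) (Hm1 t Ht)). rewrite E, (d_refl d Hm) in H.
    injection H; intro H'. assert (s * D - t * D = 0).
    { destruct (Rle_dec 0 (s * D - t * D)). rewrite Rabs_right in H' by lra; lra. rewrite Rabs_left in H' by lra; lra. }
    assert (Hst0 : (s - t) * D = 0) by lra. apply Rmult_integral in Hst0. lra.
  - intros t Ht eps He. exists (eps / D). split; [apply Rdiv_lt_0_compat; auto|].
    intros s Hs Hst. rewrite (Hiso _ _ (Hm1 s Hs) (Hm1 t Ht)). simpl.
    replace (s * D - t * D) with ((s - t) * D) by ring. rewrite Rabs_mult, (Rabs_right D) by lra.
    apply Rmult_lt_compat_r with (r := D) in Hst; auto. unfold Rdiv in Hst.
    rewrite Rmult_assoc, Rinv_l, Rmult_1_r in Hst by lra. auto.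
Qed.

Lemma T1 {X} (d : X -> X -> Rbar) (Hm : is_ext_metric X d) (Hc : complete_on X d (fun _ => True)) x0 :
  Geo d (fin d x0) -> FP d (fin d x0) -> is_Rtree_on X d (fun y => Rbar_lt (d x0 y) p_infty).
Proof.
  intros Hg Hf. rewrite (comp_eq d Hm x0). split.
  - intros u Hu Hcau. destruct (Hc u (fun _ => I) Hcau) as [l [_ Hl]]. exists l. split; auto.
    destruct (Hl 1 Rlt_0_1) as [N HN]. specialize (HN N (le_n N)).
    apply (fin_trans d Hm _ (u N)); auto. intro E; rewrite E in HN; exact HN.
  - intros y z Sy Sz Hyz. destruct (Hg y z Sy Sz) as [phi [H0 [HD Hiso]]].
    assert (Sof : forall a b, fin d x0 a -> fin d a b -> fin d x0 b) by (intros; eapply fin_trans; eauto).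
    split; [|split].
    + eexists; apply (geo_arc d Hm); eauto.
    + intros g1 g2 A1 A2 p. rewrite (arc_image d Hm x0 Hf y z Sy Sz phi H0 HD Hiso g1 A1 p).
      rewrite (arc_image d Hm x0 Hf y z Sy Sz phi H0 HD Hiso g2 A2 p). tauto.
    + intros gamma A. exists (dr d y z), phi. split; [apply d_fin; auto; apply (Sfin d Hm x0); auto|].
      split; auto. intro p. apply (arc_image d Hm x0 Hf y z Sy Sz phi H0 HD Hiso gamma A p).
Qed.

Lemma seg_end {X} (d : X -> X -> Rbar) (Hm : is_ext_metric X d) (psi : R -> X) D sa sb :
  (forall s t, 0 <= s <= D -> 0 <= t <= D -> d (psi s) (psi t) = Finite (Rabs (s - t))) ->
  0 <= sa <= D -> 0 <= sb <= D -> d (psi sa) (psi sb) = Finite D ->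
  (sa = 0 /\ sb = D) \/ (sa = D /\ sb = 0).
Proof.
  intros Hiso Ha Hb E. rewrite Hiso in E by auto. injection E; intro E'.
  destruct (Rle_dec 0 (sa - sb)); [rewrite Rabs_right in E' by lra|rewrite Rabs_left in E' by lra]; lra.
Qed.

Lemma seg_mid {X} (d : X -> X -> Rbar) (Hm : is_ext_metric X d) (psi : R -> X) D sa sb sc :
  (forall s t, 0 <= s <= D -> 0 <= t <= D -> d (psi s) (psi t) = Finite (Rabs (s - t))) ->
  0 <= sa <= D -> 0 <= sb <= D -> 0 <= sc <= D -> d (psi sa) (psi sb) = Finite D ->
  dr d (psi sa) (psi sc) + dr d (psi sc) (psi sb) = D.
Proof.
  intros Hiso Ha Hb Hc E. destruct (seg_end d Hm psi D sa sb Hiso Ha Hb E) as [[-> ->]|[-> ->]];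
  unfold dr; rewrite !Hiso by auto; simpl;
  rewrite ?Rabs_left1, ?Rabs_right by lra; lra.
Qed.

Lemma lip_cont {X} (d : X -> X -> Rbar) (Hm : is_ext_metric X d) (g : R -> X) L : 0 < L ->
  (forall u v, 0 <= u <= 1 -> 0 <= v <= 1 -> fin d (g u) (g v) /\ dr d (g u) (g v) <= L * Rabs (u - v)) ->
  forall t, 0 <= t <= 1 -> forall eps, 0 < eps -> exists delta, 0 < delta /\
     forall s, 0 <= s <= 1 -> Rabs (s - t) < delta -> Rbar_lt (d (g s) (g t)) (Finite eps).
Proof.
  intros HL H t Ht eps He. exists (eps / L). split; [apply Rdiv_lt_0_compat; auto|].
  intros s Hs Hst. destruct (H s t Hs Ht) as [F Hle]. apply (lt_fin d Hm); auto.
  apply Rmult_lt_compat_l with (r := L) in Hst; auto.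
  replace (L * (eps / L)) with eps in Hst by (field; lra). lra.
Qed.

Lemma gpmin_FP {X} (d : X -> X -> Rbar) (Hm : is_ext_metric X d) (S : X -> Prop) :
  (forall y a b c, S y -> S a -> S b -> S c -> gp d y a b >= gp d y a c \/ gp d y a b >= gp d y c b) ->
  FP d S.
Proof.
  intros H x y z w Sx Sy Sz Sw. unfold FPs.
  pose proof (dr_sym d Hm x y). pose proof (dr_sym d Hm x z). pose proof (dr_sym d Hm x w).
  pose proof (dr_sym d Hm y z). pose proof (dr_sym d Hm y w). pose proof (dr_sym d Hm z w).
  split; [|split].
  - destruct (H z x y w) as [A|A]; auto; unfold gp in A; first [left; lra | right; lra].
  - destruct (H y x z w) as [A|A]; auto; unfold gp in A; first [left; lra | right; lra].
  - destruct (H z x w y) as [A|A]; auto; unfold gp in A; first [left; lra | right; lra].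
Qed.

Definition geod {X} (d : X -> X -> Rbar) (phi : R -> X) y L := phi 0 = y /\
  forall s t, 0 <= s <= L -> 0 <= t <= L -> d (phi s) (phi t) = Finite (Rabs (s - t)).

Lemma geod_dr {X} (d : X -> X -> Rbar) phi y L s t : geod d phi y L -> 0 <= s <= L -> 0 <= t <= L ->
  fin d (phi s) (phi t) /\ dr d (phi s) (phi t) = Rabs (s - t).
Proof. intros [_ H] Hs Ht. apply fin_of. auto. Qed.

Lemma geod_dry {X} (d : X -> X -> Rbar) phi y L s : geod d phi y L -> 0 <= s <= L ->
  fin d y (phi s) /\ dr d y (phi s) = s.
Proof. intros G Hs. destruct G as [H0 H]. assert (A : 0 <= 0 <= L) by lra.
  destruct (fin_of d _ _ _ (H 0 s A Hs)) as [F E]. rewrite H0 in F, E. split; auto.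
  rewrite E, Rabs_left1 by lra. lra. Qed.

Lemma small_zero x : 0 <= x -> (forall eps, 0 < eps -> x <= 2 * eps) -> x = 0.
Proof. intros H0 H. destruct (Req_dec x 0); auto. specialize (H (x / 4)). lra. Qed.

Section T2.
Context {X : Type} (d : X -> X -> Rbar) (Hm : is_ext_metric X d) (x0 : X)
  (HT : is_Rtree_on X d (fin d x0)).

Local Notation S := (fin d x0).

Lemma Sof2 a b : S a -> fin d a b -> S b.
Proof. intros; eapply fin_trans; eauto. Qed.

Lemma geo2 : Geo d S.
Proof.
  intros y z Sy Sz. destruct (classic (y = z)) as [E|Hyz].
  - subst z. exists (fun _ => y). rewrite (dr_refl d Hm). split; [auto|split; auto].
    intros s t Hs Ht. replace s with 0 by lra. replace t with 0 by lra.
    rewrite Rminus_0_r, Rabs_R0. apply (d_refl d Hm).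
  - destruct HT as [_ HT']. destruct (HT' y z Sy Sz Hyz) as [[gam Ha] [_ H3]].
    destruct (H3 gam Ha) as [D [psi [EyzD [Hiso Him]]]].
    destruct (Him y) as [Hy _]. destruct Hy as [sy [Hsy Ey]].
    { exists 0. split; [lra|]. destruct Ha as [_ [? _]]; auto. }
    destruct (Him z) as [Hz _]. destruct Hz as [sz [Hsz Ez]].
    { exists 1. split; [lra|]. destruct Ha as [_ [_ [? _]]]; auto. }
    destruct (fin_of d _ _ _ EyzD) as [Fyz Dyz]. rewrite Dyz.
    assert (E' : d (psi sy) (psi sz) = Finite D) by (rewrite Ey, Ez; auto).
    destruct (seg_end d Hm psi D sy sz Hiso Hsy Hsz E') as [[-> ->]|[-> ->]].
    + exists psi. split; auto.
    + exists (fun t => psi (D - t)). split; [rewrite Rminus_0_r; auto|]. split; [rewrite Rminus_diag; auto|].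
      intros s t Hs Ht. rewrite Hiso by lra. f_equal. replace (D - s - (D - t)) with (- (s - t)) by ring.
      apply Rabs_Ropp.
Qed.

Lemma DC y a b pa pb t : S y -> geod d pa y (dr d y a) -> geod d pb y (dr d y b) ->
  0 <= t -> t <= dr d y a -> t <= dr d y b -> pa t = pb t ->
  forall t', 0 <= t' <= t -> pa t' = pb t'.
Proof.
  intros Sy Ga Gb Ht0 Hta Htb E t' Ht'.
  destruct (Req_dec t 0) as [Z|NZ].
  { replace t' with 0 by lra. destruct Ga as [-> _]; destruct Gb as [-> _]; auto. }
  set (p := pa t).
  destruct (geod_dry d pa y _ t Ga ltac:(lra)) as [Fp Dp]. fold p in Fp, Dp.
  destruct (geod_dry d pb y _ t Gb ltac:(lra)) as [Fp' Dp']. rewrite <- E in Fp', Dp'. fold p in Fp', Dp'.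
  assert (Sp : S p) by (apply (Sof2 y); auto).
  assert (Hyp : y <> p) by (intro Q; rewrite <- Q, (dr_refl d Hm) in Dp; lra).
  assert (A1 : is_arc_path X d S y p (fun u => pa (u * dr d y p))).
  { apply (geo_arc d Hm); auto. apply Sof2. destruct Ga; auto. rewrite Dp; auto.
    intros s s' Hs Hs'. destruct Ga as [_ G]. apply G; lra. }
  assert (A2 : is_arc_path X d S y p (fun u => pb (u * dr d y p))).
  { apply (geo_arc d Hm); auto. apply Sof2. destruct Gb; auto. rewrite Dp; unfold p; auto.
    intros s s' Hs Hs'. destruct Gb as [_ G]. apply G; lra. }
  destruct HT as [_ HT']. destruct (HT' y p Sy Sp Hyp) as [_ [Hu _]].
  destruct (proj1 (Hu _ _ A1 A2 (pa t'))) as [u' [Hu' Eu']].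
  { exists (t' / t). split. split; [unfold Rdiv; apply Rmult_le_pos; [lra| left; apply Rinv_0_lt_compat; lra]|].
    apply Rmult_le_reg_r with t; [lra|]. unfold Rdiv; rewrite Rmult_assoc, Rinv_l; lra.
    rewrite Dp. f_equal. field. auto. }
  rewrite Dp in Eu'.
  assert (u' * t <= t) by nra.
  destruct (geod_dry d pb y _ (u' * t) Gb ltac:(nra)) as [_ D1].
  destruct (geod_dry d pa y _ t' Ga ltac:(lra)) as [_ D2].
  rewrite Eu' in D1. rewrite D1 in D2. rewrite D2 in Eu'. symmetry; exact Eu'.
Qed.
End T2.

Section T2b.
Context {X : Type} (d : X -> X -> Rbar) (Hm : is_ext_metric X d) (x0 : X)
  (HT : is_Rtree_on X d (fin d x0)).
Local Notation S := (fin d x0).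

Lemma concat y a b pa pb m : S y -> a <> b ->
  geod d pa y (dr d y a) -> geod d pb y (dr d y b) -> pa (dr d y a) = a -> pb (dr d y b) = b ->
  0 <= m -> m <= dr d y a -> m <= dr d y b -> pa m = pb m ->
  (forall tau, m < tau -> tau <= dr d y a -> tau <= dr d y b -> pa tau <> pb tau) ->
  dr d a b = dr d y a + dr d y b - 2 * m.
Proof.
  intros Sy Hab Ga Gb Ea Eb Hm0 Hma Hmb Em Hno.
  set (La := dr d y a) in *. set (Lb := dr d y b) in *.
  set (L1 := La - m). set (L2 := Lb - m). set (L := L1 + L2).
  assert (HL : 0 < L).
  { destruct (Req_dec L 0) as [Z|]; [|unfold L, L1, L2 in *; lra]. exfalso. apply Hab.
    assert (La = m) by (unfold L, L1, L2 in *; lra). assert (Lb = m) by (unfold L, L1, L2 in *; lra).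
    rewrite <- Ea, <- Eb. rewrite H, H0. auto. }
  set (gam := fun u => if Rle_dec (u * L) L1 then pa (La - u * L) else pb (m + u * L - L1)).
  assert (Gv : forall u, 0 <= u <= 1 -> (u * L <= L1 /\ gam u = pa (La - u * L) /\ 0 <= La - u * L <= La /\ m <= La - u * L)
                                  \/ (L1 < u * L /\ gam u = pb (m + u * L - L1) /\ 0 <= m + u * L - L1 <= Lb /\ m < m + u * L - L1)).
  { intros u Hu. unfold gam. assert (u * L <= L) by nra. assert (0 <= u * L) by nra.
    destruct (Rle_dec (u * L) L1); [left|right]; unfold L, L1, L2 in *; repeat split; lra. }
  assert (Fa : forall s, 0 <= s <= La -> S (pa s)).
  { intros s Hs. apply (Sof2 d Hm x0 y); auto. apply (geod_dry d pa y La s Ga Hs). }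
  assert (Fb : forall s, 0 <= s <= Lb -> S (pb s)).
  { intros s Hs. apply (Sof2 d Hm x0 y); auto. apply (geod_dry d pb y Lb s Gb Hs). }
  assert (SS : forall p q, S p -> S q -> fin d p q) by (intros; apply (Sfin d Hm x0); auto).
  assert (Mix : forall s t, m <= s <= La -> m <= t <= Lb -> dr d (pa s) (pb t) <= (s - m) + (t - m)).
  { intros s t Hs Ht. eapply Rle_trans. apply (dr_tri d Hm _ (pa m)); apply SS; apply Fa || apply Fb; lra.
    rewrite Em at 2. destruct (geod_dr d pa y La s m Ga ltac:(lra) ltac:(lra)) as [_ E1].
    destruct (geod_dr d pb y Lb m t Gb ltac:(lra) ltac:(lra)) as [_ E2].
    rewrite E1, E2, Rabs_right, Rabs_left1 by lra. lra. }
  assert (Arc : is_arc_path X d S a b gam).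
  { split; [|split; [|split; [|split]]].
    - intros t Ht. destruct (Gv t Ht) as [[_ [-> [? _]]]|[_ [-> [? _]]]]; [apply Fa|apply Fb]; auto.
    - unfold gam. rewrite Rmult_0_l. destruct (Rle_dec 0 L1); [|unfold L1 in *; lra]. rewrite Rminus_0_r; auto.
    - unfold gam. rewrite Rmult_1_l. destruct (Rle_dec L L1).
      + assert (Lb = m) by (unfold L, L1, L2 in *; lra). replace (La - L) with m by (unfold L, L1, L2 in *; lra).
        rewrite Em, <- H; auto.
      + replace (m + L - L1) with Lb by (unfold L, L1, L2; lra). auto.
    - intros u v Hu Hv E.
      destruct (Gv u Hu) as [[U1 [U2 [U3 U4]]]|[U1 [U2 [U3 U4]]]];
      destruct (Gv v Hv) as [[V1 [V2 [V3 V4]]]|[V1 [V2 [V3 V4]]]]; rewrite U2, V2 in E.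
      + destruct (geod_dr d pa y La _ _ Ga U3 V3) as [_ E1]. rewrite E, (dr_refl d Hm) in E1.
        assert (u * L = v * L) by (destruct (Rle_dec 0 (La - u * L - (La - v * L)));
          [rewrite Rabs_right in E1|rewrite Rabs_left in E1]; lra).
        apply Rmult_eq_reg_r in H; lra.
      + exfalso. destruct (geod_dry d pa y La _ Ga U3) as [_ E1]. destruct (geod_dry d pb y Lb _ Gb V3) as [_ E2].
        rewrite E in E1. rewrite E1 in E2. apply (Hno (m + v * L - L1)); try lra. rewrite <- E2 at 1. auto.
      + exfalso. destruct (geod_dry d pa y La _ Ga V3) as [_ E1]. destruct (geod_dry d pb y Lb _ Gb U3) as [_ E2].
        rewrite <- E in E1. rewrite E1 in E2. apply (Hno (m + u * L - L1)); try lra. rewrite <- E2 at 1. auto.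
      + destruct (geod_dr d pb y Lb _ _ Gb U3 V3) as [_ E1]. rewrite E, (dr_refl d Hm) in E1.
        assert (u * L = v * L) by (destruct (Rle_dec 0 (m + u * L - L1 - (m + v * L - L1)));
          [rewrite Rabs_right in E1|rewrite Rabs_left in E1]; lra).
        apply Rmult_eq_reg_r in H; lra.
    - apply (lip_cont d Hm gam L HL). intros u v Hu Hv.
      assert (F : fin d (gam u) (gam v)).
      { apply SS; destruct (Gv u Hu) as [[_ [-> [? _]]]|[_ [-> [? _]]]] ||
                  destruct (Gv v Hv) as [[_ [-> [? _]]]|[_ [-> [? _]]]]; (apply Fa || apply Fb); auto. }
      split; auto.
      destruct (Gv u Hu) as [[U1 [U2 [U3 U4]]]|[U1 [U2 [U3 U4]]]];
      destruct (Gv v Hv) as [[V1 [V2 [V3 V4]]]|[V1 [V2 [V3 V4]]]]; rewrite U2, V2.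
      + destruct (geod_dr d pa y La _ _ Ga U3 V3) as [_ ->].
        replace (La - u * L - (La - v * L)) with (- (L * (u - v))) by ring.
        rewrite Rabs_Ropp, Rabs_mult, (Rabs_right L) by lra. lra.
      + assert (u < v) by (apply Rmult_lt_reg_r with L; lra).
        eapply Rle_trans; [apply Mix; lra|]. rewrite Rabs_left1 by lra. unfold L1; lra.
      + assert (v < u) by (apply Rmult_lt_reg_r with L; lra).
        rewrite (dr_sym d Hm). eapply Rle_trans; [apply Mix; lra|]. rewrite Rabs_right by lra. unfold L1; lra.
      + destruct (geod_dr d pb y Lb _ _ Gb U3 V3) as [_ ->].
        replace (m + u * L - L1 - (m + v * L - L1)) with (L * (u - v)) by ring.
        rewrite Rabs_mult, (Rabs_right L) by lra. lra. }
  destruct HT as [_ HT'].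
  assert (Sa : S a) by (rewrite <- Ea; apply Fa; unfold La; split; [apply (dr_nonneg d Hm)|lra]).
  assert (Sb : S b) by (rewrite <- Eb; apply Fb; unfold Lb; split; [apply (dr_nonneg d Hm)|lra]).
  destruct (HT' a b Sa Sb Hab) as [_ [_ H3]].
  destruct (H3 gam Arc) as [D [psi [EabD [Hiso Him]]]].
  assert (Img : forall u, 0 <= u <= 1 -> exists s, 0 <= s <= D /\ psi s = gam u).
  { intros u Hu. apply Him. exists u; auto. }
  destruct (Img 0 ltac:(lra)) as [sa [Hsa Ea']]. destruct (Img 1 ltac:(lra)) as [sb [Hsb Eb']].
  assert (HuL : 0 <= L1 / L <= 1).
  { split; [unfold Rdiv; apply Rmult_le_pos; [unfold L1; lra| left; apply Rinv_0_lt_compat; lra]|].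
    apply Rmult_le_reg_r with L; [lra|]. unfold Rdiv; rewrite Rmult_assoc, Rinv_l; unfold L, L1, L2 in *; lra. }
  destruct (Img (L1 / L) HuL) as [sc [Hsc Ec]].
  assert (G0 : gam 0 = a) by (destruct Arc as [_ [? _]]; auto).
  assert (G1 : gam 1 = b) by (destruct Arc as [_ [_ [? _]]]; auto).
  assert (Gc : gam (L1 / L) = pa m).
  { unfold gam. replace (L1 / L * L) with L1 by (field; lra). destruct (Rle_dec L1 L1); [|lra].
    unfold L1; f_equal; ring. }
  rewrite G0 in Ea'. rewrite G1 in Eb'. rewrite Gc in Ec.
  assert (E' : d (psi sa) (psi sb) = Finite D) by (rewrite Ea', Eb'; auto).
  pose proof (seg_mid d Hm psi D sa sb sc Hiso Hsa Hsb Hsc E') as SM.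
  rewrite Ea', Eb', Ec in SM.
  destruct (fin_of d _ _ _ EabD) as [_ ->].
  rewrite <- SM. rewrite <- Ea at 1. rewrite Em at 2. rewrite <- Eb.
  destruct (geod_dr d pa y La La m Ga ltac:(lra) ltac:(lra)) as [_ ->].
  destruct (geod_dr d pb y Lb m Lb Gb ltac:(lra) ltac:(lra)) as [_ ->].
  rewrite Rabs_right, Rabs_left1 by lra. lra.
Qed.
End T2b.

Section T2c.
Context {X : Type} (d : X -> X -> Rbar) (Hm : is_ext_metric X d) (x0 : X)
  (HT : is_Rtree_on X d (fin d x0)).
Local Notation S := (fin d x0).

Lemma Kmain y a b pa pb t : S y -> S a -> S b ->
  geod d pa y (dr d y a) -> geod d pb y (dr d y b) -> pa (dr d y a) = a -> pb (dr d y b) = b ->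
  0 <= t -> t <= dr d y a -> t <= dr d y b -> t <= gp d y a b -> pa t = pb t.
Proof.
  intros Sy Sa Sb Ga Gb Ea Eb Ht0 Hta Htb Htg.
  set (La := dr d y a) in *. set (Lb := dr d y b) in *.
  set (E := fun s => 0 <= s <= Rmin La Lb /\ pa s = pb s).
  assert (HLa : 0 <= La) by apply (dr_nonneg d Hm). assert (HLb : 0 <= Lb) by apply (dr_nonneg d Hm).
  assert (H0m : 0 <= Rmin La Lb) by (apply Rmin_case; lra).
  assert (E0 : E 0) by (split; [lra|]; destruct Ga as [-> _]; destruct Gb as [-> _]; auto).
  assert (bE : bound E) by (exists (Rmin La Lb); intros s [Hs _]; lra).
  destruct (completeness E bE (ex_intro _ 0 E0)) as [m [Hub Hlub]].
  assert (Hm0 : 0 <= m) by (apply Hub; auto).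
  assert (HmM : m <= Rmin La Lb) by (apply Hlub; intros s [Hs _]; lra).
  assert (HmLa : m <= La) by (pose proof (Rmin_l La Lb); lra).
  assert (HmLb : m <= Lb) by (pose proof (Rmin_r La Lb); lra).
  assert (Em : pa m = pb m).
  { destruct (geod_dr d pa y La m m Ga ltac:(lra) ltac:(lra)) as [Fa _].
    destruct (geod_dry d pa y La m Ga ltac:(lra)) as [Fya _].
    destruct (geod_dry d pb y Lb m Gb ltac:(lra)) as [Fyb _].
    assert (Fab : fin d (pa m) (pb m)) by (apply (fin_trans d Hm _ y); auto; apply fin_sym; auto).
    apply (dr_eq0 d Hm); auto. apply small_zero; [apply (dr_nonneg d Hm)|]. intros eps He.
    destruct (classic (exists s, E s /\ m - eps < s)) as [[s [[Hs Es] Hse]]|Hn].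
    - assert (s <= m) by (apply Hub; split; auto).
      assert (HsLa : s <= La) by (pose proof (Rmin_l La Lb); lra).
      assert (HsLb : s <= Lb) by (pose proof (Rmin_r La Lb); lra).
      destruct (geod_dr d pa y La m s Ga ltac:(lra) ltac:(lra)) as [F1 D1].
      destruct (geod_dr d pb y Lb s m Gb ltac:(lra) ltac:(lra)) as [F2 D2].
      rewrite <- Es in F2, D2.
      eapply Rle_trans; [apply (dr_tri d Hm _ (pa s)); auto|]. rewrite D1, D2.
      rewrite Rabs_right, Rabs_left1 by lra. lra.
    - exfalso. assert (is_upper_bound E (m - eps)).
      { intros s Es. destruct (Rle_dec s (m - eps)); auto. exfalso; apply Hn; exists s; split; auto; lra. }
      specialize (Hlub _ H). lra. }
  assert (Hno : forall tau, m < tau -> tau <= La -> tau <= Lb -> pa tau <> pb tau).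
  { intros tau H1 H2 H3 Q. assert (E tau) by (split; auto; split; [lra|apply Rmin_case; lra]).
    specialize (Hub _ H). lra. }
  assert (Hgm : gp d y a b <= m).
  { destruct (classic (a = b)) as [<-|Hab].
    - assert (E La).
      { split; [split; [lra|]; apply Rmin_case; unfold Lb, La; lra|]. rewrite Ea.
        replace La with Lb by (unfold La, Lb; auto). auto. }
      specialize (Hub _ H). pose proof (gp_le d Hm y a a (Sfin d Hm x0 _ _ Sy Sa) (Sfin d Hm x0 _ _ Sy Sa)).
      unfold La in *; lra.
    - pose proof (concat d Hm x0 HT y a b pa pb m Sy Hab Ga Gb Ea Eb Hm0 HmLa HmLb Em Hno).
      unfold gp. rewrite H. unfold La, Lb. lra. }
  apply (DC d Hm x0 HT y a b pa pb m Sy Ga Gb Hm0 HmLa HmLb Em t). lra.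
Qed.

Lemma Keasy y a b pa pb t : S y -> S a -> S b ->
  geod d pa y (dr d y a) -> geod d pb y (dr d y b) -> pa (dr d y a) = a -> pb (dr d y b) = b ->
  0 <= t -> t <= dr d y a -> t <= dr d y b -> pa t = pb t -> t <= gp d y a b.
Proof.
  intros Sy Sa Sb Ga Gb Ea Eb Ht0 Hta Htb E.
  destruct (geod_dr d pa y _ t (dr d y a) Ga ltac:(lra) ltac:(split; [apply (dr_nonneg d Hm)|lra])) as [F1 D1].
  destruct (geod_dr d pb y _ t (dr d y b) Gb ltac:(lra) ltac:(split; [apply (dr_nonneg d Hm)|lra])) as [F2 D2].
  rewrite Ea in F1, D1. rewrite Eb in F2, D2. rewrite <- E in F2, D2.
  assert (dr d a b <= dr d a (pa t) + dr d (pa t) b).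
  { apply (dr_tri d Hm); auto. apply fin_sym; auto. }
  rewrite (dr_sym d Hm a (pa t)) in H. rewrite D1, D2 in H. rewrite (Rabs_left1 (t - dr d y a)), (Rabs_left1 (t - dr d y b)) in H by lra.
  unfold gp. lra.
Qed.

Lemma FP2 : FP d S.
Proof.
  apply (gpmin_FP d Hm). intros y a b c Sy Sa Sb Sc.
  destruct (geo2 d Hm x0 HT y a Sy Sa) as [pa [Pa0 [PaE Pai]]].
  destruct (geo2 d Hm x0 HT y b Sy Sb) as [pb [Pb0 [PbE Pbi]]].
  destruct (geo2 d Hm x0 HT y c Sy Sc) as [pc [Pc0 [PcE Pci]]].
  assert (Ga : geod d pa y (dr d y a)) by (split; auto).
  assert (Gb : geod d pb y (dr d y b)) by (split; auto).
  assert (Gc : geod d pc y (dr d y c)) by (split; auto).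
  set (mu := Rmin (gp d y a c) (gp d y c b)).
  destruct (Rle_dec mu (gp d y a b)) as [Hle|Hlt].
  { unfold mu in Hle. revert Hle. apply Rmin_case; intro; [left|right]; lra. }
  exfalso. apply Hlt.
  assert (F : forall p q, S p -> S q -> fin d p q) by (intros; apply (Sfin d Hm x0); auto).
  pose proof (gp_le d Hm y a c (F _ _ Sy Sa) (F _ _ Sy Sc)).
  pose proof (gp_le d Hm y c a (F _ _ Sy Sc) (F _ _ Sy Sa)).
  pose proof (gp_le d Hm y c b (F _ _ Sy Sc) (F _ _ Sy Sb)).
  pose proof (gp_le d Hm y b c (F _ _ Sy Sb) (F _ _ Sy Sc)).
  pose proof (gp_ge0 d Hm y a c (F _ _ Sy Sa) (F _ _ Sy Sc)).
  pose proof (gp_ge0 d Hm y c b (F _ _ Sy Sc) (F _ _ Sy Sb)).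
  rewrite (gp_sym d Hm y c a) in *. rewrite (gp_sym d Hm y b c) in *.
  assert (M1 : mu <= gp d y a c) by apply Rmin_l. assert (M2 : mu <= gp d y c b) by apply Rmin_r.
  assert (M0 : 0 <= mu) by (unfold mu; apply Rmin_case; lra).
  assert (E1 : pa mu = pc mu) by (apply (Kmain y a c); auto; lra).
  assert (E2 : pc mu = pb mu) by (apply (Kmain y c b); auto; lra).
  apply (Keasy y a b pa pb); auto; try lra. congruence.
Qed.
End T2c.

Lemma RF_props {X} (d : X -> X -> Rbar) : is_Rforest X d -> forall x0, Geo d (fin d x0) /\ FP d (fin d x0).
Proof.
  intros [Hm [Hc Ht]] x0. specialize (Ht x0). rewrite (comp_eq d Hm x0) in Ht.
  split; [apply (geo2 d Hm x0 Ht)|apply (FP2 d Hm x0 Ht)].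
Qed.

Lemma inv_small eps : 0 < eps -> exists N, forall n, (N <= n)%nat -> / (INR n + 1) < eps.
Proof.
  intros He. destruct (archimed_cor1 eps He) as [N [HN HN0]]. exists N. intros n Hn.
  apply le_INR in Hn. apply lt_INR in HN0. simpl in HN0.
  eapply Rlt_trans; [|exact HN]. apply Rinv_lt_contravar; [apply Rmult_lt_0_compat; lra|lra].
Qed.

Lemma inv_pos n : 0 < / (INR n + 1).
Proof. apply Rinv_0_lt_compat. pose proof (pos_INR n). lra. Qed.

Lemma le_of_eps x y : (forall eps, 0 < eps -> x <= y + eps) -> x <= y.
Proof. intros H. destruct (Rle_dec x y); auto. specialize (H ((x - y)/2)). lra. Qed.

Section MF.
Context {B : Type} (dB : B -> B -> Rbar) (HmB : is_ext_metric B dB).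

Lemma MF b p q chi : FP dB (fin dB b) -> fin dB b p -> fin dB b q ->
  geod dB chi p (dr dB p q) -> chi (dr dB p q) = q ->
  exists s, 0 <= s <= dr dB p q /\ fin dB b (chi s) /\ dr dB b (chi s) = gp dB b p q.
Proof.
  intros Hfp Fp Fq G Eq.
  assert (Fpq : fin dB p q) by (apply (fin_trans dB HmB _ b); auto; apply fin_sym; auto).
  set (L := dr dB p q) in *.
  set (s := gp dB p b q).
  assert (Hs : 0 <= s <= L).
  { split; [apply (gp_ge0 dB HmB); auto; apply fin_sym; auto|].
    unfold s, gp. assert (dr dB p q <= dr dB p b + dr dB b q) by (apply (dr_tri dB HmB); auto; apply fin_sym; auto).
    assert (dr dB p b <= dr dB p q + dr dB q b) by (apply (dr_tri dB HmB); auto; apply fin_sym; auto).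
    rewrite (dr_sym dB HmB q b) in *. unfold L. lra. }
  destruct (geod_dry dB chi p L s G Hs) as [Fm Dm].
  destruct (geod_dr dB chi p L s L G Hs ltac:(lra)) as [Fmq Dmq]. rewrite Eq in Fmq, Dmq.
  rewrite Rabs_left1 in Dmq by lra.
  assert (Fbm : fin dB b (chi s)) by (apply (fin_trans dB HmB _ p); auto).
  exists s. split; auto. split; auto.
  assert (Es : s = (dr dB p b + L - dr dB b q)/2) by reflexivity.
  assert (Tr : dr dB b p <= dr dB b (chi s) + dr dB (chi s) p) by (apply (dr_tri dB HmB); auto; apply fin_sym; auto).
  pose proof (dr_sym dB HmB (chi s) p). pose proof (dr_sym dB HmB p b).
  assert (Fbb : fin dB b b) by apply fin_refl, HmB.
  assert (Fbp : fin dB b (chi s)) by auto.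
  destruct (Hfp b (chi s) p q Fbb Fbp Fp Fq) as [[H1|H1] _]; unfold gp; assert (EL : L = dr dB p q) by reflexivity; lra.
Qed.
End MF.

Section Proj.
Context {A : Type} (dA : A -> A -> Rbar) (HmA : is_ext_metric A dA) (HcA : complete_on A dA (fun _ => True))
  (HgA : forall x0, Geo dA (fin dA x0))
  {B : Type} (dB : B -> B -> Rbar) (HmB : is_ext_metric B dB) (HfB : forall x0, FP dB (fin dB x0))
  (f : A -> B) (Hf : isometric_embedding A B dA dB f).

Lemma fin_f a a' : fin dB (f a) (f a') <-> fin dA a a'.
Proof. unfold fin. rewrite Hf. tauto. Qed.

Lemma dr_f a a' : dr dB (f a) (f a') = dr dA a a'.
Proof. unfold dr. rewrite Hf. auto. Qed.

Lemma KI b a0 del : fin dB b (f a0) -> (forall a, fin dA a0 a -> del <= dr dB b (f a)) ->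
  forall a1 a2, fin dA a0 a1 -> fin dA a0 a2 -> dr dA a1 a2 <= (dr dB b (f a1) - del) + (dr dB b (f a2) - del).
Proof.
  intros F0 Hdel a1 a2 F1 F2.
  destruct (HgA a0 a1 a2 F1 F2) as [psi [P0 [PE Pi]]].
  set (chi := fun s => f (psi s)).
  assert (G : geod dB chi (f a1) (dr dB (f a1) (f a2))).
  { rewrite dr_f. split; [unfold chi; rewrite P0; auto|]. intros s t Hs Ht. unfold chi. rewrite Hf. auto. }
  assert (Ec : chi (dr dB (f a1) (f a2)) = f a2) by (unfold chi; rewrite dr_f, PE; auto).
  assert (Fb1 : fin dB b (f a1)) by (apply (fin_trans dB HmB _ (f a0)); auto; apply fin_f; auto).
  assert (Fb2 : fin dB b (f a2)) by (apply (fin_trans dB HmB _ (f a0)); auto; apply fin_f; auto).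
  destruct (MF dB HmB b (f a1) (f a2) chi (HfB b) Fb1 Fb2 G Ec) as [s [Hs [Fs Ds]]].
  rewrite dr_f in Hs.
  assert (Ga : geod dA psi a1 (dr dA a1 a2)) by (split; auto).
  destruct (geod_dry dA psi a1 _ s Ga Hs) as [Fps _].
  assert (del <= dr dB b (chi s)) by (apply Hdel; apply (fin_trans dA HmA _ a1); auto).
  rewrite Ds in H. unfold gp in H. rewrite dr_f in H. lra.
Qed.

Lemma proj_exists b a0 : fin dB b (f a0) ->
  exists a, fin dA a0 a /\ forall a', fin dA a a' -> dr dB b (f a') = dr dB b (f a) + dr dA a a'.
Proof.
  intros F0.
  set (V := fun v => exists a, fin dA a0 a /\ v = dr dB b (f a)).
  destruct (glb_exists V) as [del [Hlb Happ]].
  { exists (dr dB b (f a0)). exists a0. split; auto. apply fin_refl; auto. }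
  { intros v [a [_ ->]]. apply (dr_nonneg dB HmB). }
  assert (Hdel : forall a, fin dA a0 a -> del <= dr dB b (f a)) by (intros; apply Hlb; exists a; auto).
  assert (Hex : forall n : nat, exists a, fin dA a0 a /\ dr dB b (f a) < del + / (INR n + 1)).
  { intro n. destruct (Happ _ (inv_pos n)) as [v [[a [Fa ->]] Hv]]. exists a; auto. }
  set (an := fun n => proj1_sig (constructive_indefinite_description _ (Hex n))).
  assert (Han : forall n, fin dA a0 (an n) /\ dr dB b (f (an n)) < del + / (INR n + 1)).
  { intro n. unfold an. destruct (constructive_indefinite_description _ (Hex n)); simpl; auto. }
  assert (Fan : forall n m, fin dA (an n) (an m)).
  { intros n m. apply (fin_trans dA HmA _ a0); [apply fin_sym; auto|]; apply Han. }
  assert (Dan : forall n m, dr dA (an n) (an m) < / (INR n + 1) + / (INR m + 1)).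
  { intros n m. pose proof (KI b a0 del F0 Hdel (an n) (an m) (proj1 (Han n)) (proj1 (Han m))).
    pose proof (proj2 (Han n)). pose proof (proj2 (Han m)). lra. }
  assert (Cau : cauchy_seq A dA an).
  { intros eps He. destruct (inv_small (eps/2) ltac:(lra)) as [N HN]. exists N. intros n m Hn Hm.
    apply (lt_fin dA HmA); auto. pose proof (HN n Hn). pose proof (HN m Hm).
    specialize (Dan n m). lra. }
  destruct (HcA an (fun _ => I) Cau) as [a [_ Hconv]].
  assert (Fconv : forall eps, 0 < eps -> exists N, forall n, (N <= n)%nat -> fin dA (an n) a /\ dr dA (an n) a < eps).
  { intros eps He. destruct (Hconv eps He) as [N HN]. exists N. intros n Hn. specialize (HN n Hn).
    assert (fin dA (an n) a) by (intro E; rewrite E in HN; exact HN).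
    split; auto. apply (lt_fin dA HmA); auto. }
  assert (Fa : fin dA a0 a).
  { destruct (Fconv 1 Rlt_0_1) as [N HN]. apply (fin_trans dA HmA _ (an N)); [apply Han|apply HN; auto]. }
  assert (Ea : dr dB b (f a) = del).
  { apply Rle_antisym; [|apply Hdel; auto].
    apply le_of_eps. intros eps He.
    destruct (Fconv (eps/2) ltac:(lra)) as [N1 HN1]. destruct (inv_small (eps/2) ltac:(lra)) as [N2 HN2].
    set (n := Nat.max N1 N2).
    destruct (HN1 n (Nat.le_max_l _ _)) as [Fn Dn]. specialize (HN2 n (Nat.le_max_r _ _)).
    destruct (Han n) as [Fn' Dn'].
    assert (dr dB b (f a) <= dr dB b (f (an n)) + dr dB (f (an n)) (f a)).
    { apply (dr_tri dB HmB). apply (fin_trans dB HmB _ (f a0)); auto; apply fin_f; auto. apply fin_f; auto. }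
    rewrite dr_f in H. lra. }
  exists a. split; auto. intros a' Fa'.
  assert (Fa0a' : fin dA a0 a') by (apply (fin_trans dA HmA _ a); auto).
  pose proof (KI b a0 del F0 Hdel a a' Fa Fa0a').
  assert (dr dB b (f a') <= dr dB b (f a) + dr dB (f a) (f a')).
  { apply (dr_tri dB HmB). apply (fin_trans dB HmB _ (f a0)); auto; apply fin_f; auto. apply fin_f; auto. }
  rewrite dr_f in H0. apply Rle_antisym; lra.
Qed.

Lemma proj_unique b a1 a2 : fin dB b (f a1) -> fin dB b (f a2) ->
  (forall a', fin dA a1 a' -> dr dB b (f a') = dr dB b (f a1) + dr dA a1 a') ->
  (forall a', fin dA a2 a' -> dr dB b (f a') = dr dB b (f a2) + dr dA a2 a') -> a1 = a2.
Proof.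
  intros F1 F2 P1 P2.
  assert (F12 : fin dA a1 a2) by (apply fin_f; apply (fin_trans dB HmB _ b); auto; apply fin_sym; auto).
  specialize (P1 a2 F12). specialize (P2 a1 (fin_sym dA HmA _ _ F12)).
  rewrite (dr_sym dA HmA a2 a1) in P2. pose proof (dr_nonneg dA HmA a1 a2).
  apply (dr_eq0 dA HmA); auto. lra.
Qed.
End Proj.

Section AP.
Context {A : Type} (dA : A -> A -> Rbar) (HmA : is_ext_metric A dA) (HcA : complete_on A dA (fun _ => True))
  (HgA : forall x0, Geo dA (fin dA x0)) (HfA : forall x0, FP dA (fin dA x0))
  {B : Type} (dB : B -> B -> Rbar) (HmB : is_ext_metric B dB) (HcB : complete_on B dB (fun _ => True))
  (HgB : forall x0, Geo dB (fin dB x0)) (HfB : forall x0, FP dB (fin dB x0))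
  {C : Type} (dC : C -> C -> Rbar) (HmC : is_ext_metric C dC) (HcC : complete_on C dC (fun _ => True))
  (HgC : forall x0, Geo dC (fin dC x0)) (HfC : forall x0, FP dC (fin dC x0))
  (f : A -> B) (g : A -> C) (Hf : isometric_embedding A B dA dB f) (Hg : isometric_embedding A C dA dC g).

Definition PB b a := fin dB b (f a) /\ forall a', fin dA a a' -> dr dB b (f a') = dr dB b (f a) + dr dA a a'.
Definition PC c a := fin dC c (g a) /\ forall a', fin dA a a' -> dr dC c (g a') = dr dC c (g a) + dr dA a a'.

Lemma PB_ex b a : fin dB b (f a) -> exists a', PB b a'.
Proof. intro F. destruct (proj_exists dA HmA HcA HgA dB HmB HfB f Hf b a F) as [a' [Fa P]].
  exists a'. split; auto. apply (fin_trans dB HmB _ (f a)); auto. apply (fin_f dA dB f Hf); auto. Qed.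

Lemma PC_ex c a : fin dC c (g a) -> exists a', PC c a'.
Proof. intro F. destruct (proj_exists dA HmA HcA HgA dC HmC HfC g Hg c a F) as [a' [Fa P]].
  exists a'. split; auto. apply (fin_trans dC HmC _ (g a)); auto. apply (fin_f dA dC g Hg); auto. Qed.

Lemma PB_un b a1 a2 : PB b a1 -> PB b a2 -> a1 = a2.
Proof. intros [F1 P1] [F2 P2]. apply (proj_unique dA HmA dB HmB f Hf b); auto. Qed.

Lemma finBB b a a' : fin dB b (f a) -> fin dB b (f a') -> fin dA a a'.
Proof. intros. apply (fin_f dA dB f Hf). apply (fin_trans dB HmB _ b); auto. apply fin_sym; auto. Qed.
Lemma finCC c a a' : fin dC c (g a) -> fin dC c (g a') -> fin dA a a'.
Proof. intros. apply (fin_f dA dC g Hg). apply (fin_trans dC HmC _ c); auto. apply fin_sym; auto. Qed.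
Lemma finBA b a a' : fin dB b (f a) -> fin dA a a' -> fin dB b (f a').
Proof. intros. apply (fin_trans dB HmB _ (f a)); auto. apply (fin_f dA dB f Hf); auto. Qed.
Lemma finCA c a a' : fin dC c (g a) -> fin dA a a' -> fin dC c (g a').
Proof. intros. apply (fin_trans dC HmC _ (g a)); auto. apply (fin_f dA dC g Hg); auto. Qed.

Definition M (b : B) (c : C) : Rbar :=
  match excluded_middle_informative (exists a, PB b a /\ fin dC c (g a)) with
  | left H => let a := proj1_sig (constructive_indefinite_description _ H) in
              Finite (dr dB b (f a) + dr dC c (g a))
  | right _ => p_infty
  end.

Lemma M_formula b c a : PB b a -> fin dC c (g a) -> M b c = Finite (dr dB b (f a) + dr dC c (g a)).
Proof.
  intros P F. unfold M. destruct (excluded_middle_informative _) as [H|H].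
  - destruct (constructive_indefinite_description _ H) as [a' [P' F']]. simpl.
    rewrite (PB_un b a' a); auto.
  - exfalso; apply H; exists a; auto.
Qed.

Lemma M_inf b c : (forall a, fin dB b (f a) -> fin dC c (g a) -> False) -> M b c = p_infty.
Proof.
  intros H. unfold M. destruct (excluded_middle_informative _) as [Hx|]; auto.
  exfalso. destruct Hx as [a [[P _] F]]; eauto.
Qed.

Lemma M_formula2 b c a : PC c a -> fin dB b (f a) -> M b c = Finite (dr dB b (f a) + dr dC c (g a)).
Proof.
  intros [Fc Pc] Fb. destruct (PB_ex b a Fb) as [a1 P1].
  assert (F1 : fin dA a a1) by (apply (finBB b); auto; apply P1).
  rewrite (M_formula b c a1 P1); [|apply (finCA c a); auto].
  destruct P1 as [Fb1 P1]. rewrite (Pc a1 F1). rewrite (P1 a (fin_sym dA HmA _ _ F1)).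
  rewrite (dr_sym dA HmA a1 a). f_equal. ring.
Qed.

Definition finM b c := M b c <> p_infty.
Definition Mr b c := real (M b c).

Lemma MI1 b c a : fin dB b (f a) -> fin dC c (g a) -> finM b c /\ Mr b c <= dr dB b (f a) + dr dC c (g a).
Proof.
  intros Fb Fc. destruct (PB_ex b a Fb) as [a1 P1].
  assert (F1 : fin dA a a1) by (apply (finBB b); auto; apply P1).
  unfold finM, Mr. rewrite (M_formula b c a1 P1); [|apply (finCA c a); auto]. simpl. split; [congruence|].
  destruct P1 as [Fb1 P1]. rewrite (P1 a (fin_sym dA HmA _ _ F1)).
  assert (dr dC c (g a1) <= dr dC c (g a) + dr dC (g a) (g a1)).
  { apply (dr_tri dC HmC); auto. apply (fin_f dA dC g Hg); auto. }
  rewrite (dr_f dA dC g Hg) in H. rewrite (dr_sym dA HmA a1 a). pose proof (dr_nonneg dA HmA a a1). lra.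
Qed.

Lemma MI2 b c : finM b c -> exists a, PB b a /\ fin dC c (g a) /\ M b c = Finite (dr dB b (f a) + dr dC c (g a)).
Proof.
  unfold finM, M. destruct (excluded_middle_informative _) as [H|H]; [|congruence].
  intros _. destruct (constructive_indefinite_description _ H) as [a [P F]]. simpl. exists a. auto.
Qed.

Lemma M_ge0 b c : Rbar_le (Finite 0) (M b c).
Proof.
  unfold M. destruct (excluded_middle_informative _); simpl; auto.
  pose proof (dr_nonneg dB HmB b (f (proj1_sig (constructive_indefinite_description _ e)))).
  pose proof (dr_nonneg dC HmC c (g (proj1_sig (constructive_indefinite_description _ e)))). lra.
Qed.

Lemma M_fin_dr b c : finM b c -> M b c = Finite (Mr b c).
Proof. unfold finM, Mr. unfold M. destruct (excluded_middle_informative _); simpl; congruence. Qed.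

Lemma Mr_ge0 b c : 0 <= Mr b c.
Proof. pose proof (M_ge0 b c). unfold Mr. destruct (M b c); simpl in *; lra. Qed.

Lemma TB1 b b' c : fin dB b b' -> finM b' c -> finM b c /\ Mr b c <= dr dB b b' + Mr b' c.
Proof.
  intros F H. destruct (MI2 b' c H) as [a [[Fb' _] [Fc E]]].
  assert (Fb : fin dB b (f a)) by (apply (fin_trans dB HmB _ b'); auto).
  destruct (MI1 b c a Fb Fc) as [H1 H2]. split; auto.
  unfold Mr at 2. rewrite E. simpl.
  assert (dr dB b (f a) <= dr dB b b' + dr dB b' (f a)) by (apply (dr_tri dB HmB); auto). lra.
Qed.

Lemma TB2 b b' c : finM b c -> finM b' c -> fin dB b b' /\ dr dB b b' <= Mr b c + Mr b' c.
Proof.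
  intros H H'. destruct (MI2 b c H) as [a [[Fb _] [Fc E]]]. destruct (MI2 b' c H') as [a' [[Fb' _] [Fc' E']]].
  unfold Mr. rewrite E, E'. simpl.
  assert (Faa : fin dA a a') by (apply (finCC c); auto).
  assert (F1 : fin dB (f a) (f a')) by (apply (fin_f dA dB f Hf); auto).
  assert (F2 : fin dB b (f a')) by (apply (fin_trans dB HmB _ (f a)); auto).
  assert (F3 : fin dB b b') by (apply (fin_trans dB HmB _ (f a')); auto; apply fin_sym; auto).
  split; auto.
  assert (dr dB b b' <= dr dB b (f a') + dr dB (f a') b') by (apply (dr_tri dB HmB); auto; apply fin_sym; auto).
  assert (dr dB b (f a') <= dr dB b (f a) + dr dB (f a) (f a')) by (apply (dr_tri dB HmB); auto).
  assert (dr dC (g a) (g a') <= dr dC (g a) c + dr dC c (g a')) by (apply (dr_tri dC HmC); auto; apply fin_sym; auto).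
  rewrite (dr_f dA dB f Hf) in *. rewrite (dr_f dA dC g Hg) in *.
  rewrite (dr_sym dB HmB (f a') b') in *. rewrite (dr_sym dC HmC (g a) c) in *. lra.
Qed.

Lemma TC1 b c c' : fin dC c c' -> finM b c' -> finM b c /\ Mr b c <= dr dC c c' + Mr b c'.
Proof.
  intros F H. destruct (MI2 b c' H) as [a [[Fb _] [Fc E]]].
  assert (Fca : fin dC c (g a)) by (apply (fin_trans dC HmC _ c'); auto).
  destruct (MI1 b c a Fb Fca) as [H1 H2]. split; auto.
  unfold Mr at 2. rewrite E. simpl.
  assert (dr dC c (g a) <= dr dC c c' + dr dC c' (g a)) by (apply (dr_tri dC HmC); auto). lra.
Qed.

Lemma TC2 b c c' : finM b c -> finM b c' -> fin dC c c' /\ dr dC c c' <= Mr b c + Mr b c'.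
Proof.
  intros H H'. destruct (MI2 b c H) as [a [[Fb _] [Fc E]]]. destruct (MI2 b c' H') as [a' [[Fb' _] [Fc' E']]].
  unfold Mr. rewrite E, E'. simpl.
  assert (Faa : fin dA a a') by (apply (finBB b); auto).
  assert (F1 : fin dC (g a) (g a')) by (apply (fin_f dA dC g Hg); auto).
  assert (F2 : fin dC c (g a')) by (apply (fin_trans dC HmC _ (g a)); auto).
  assert (F3 : fin dC c c') by (apply (fin_trans dC HmC _ (g a')); auto; apply fin_sym; auto).
  split; auto.
  assert (dr dC c c' <= dr dC c (g a') + dr dC (g a') c') by (apply (dr_tri dC HmC); auto; apply fin_sym; auto).
  assert (dr dC c (g a') <= dr dC c (g a) + dr dC (g a) (g a')) by (apply (dr_tri dC HmC); auto).
  assert (dr dB (f a) (f a') <= dr dB (f a) b + dr dB b (f a')) by (apply (dr_tri dB HmB); auto; apply fin_sym; auto).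
  rewrite (dr_f dA dB f Hf) in *. rewrite (dr_f dA dC g Hg) in *.
  rewrite (dr_sym dC HmC (g a') c') in *. rewrite (dr_sym dB HmB (f a) b) in *. lra.
Qed.


Definition Cp := {c : C | forall a, g a <> c}.
Definition D := (B + Cp)%type.
Definition dD (x y : D) : Rbar :=
  match x, y with
  | inl b, inl b' => dB b b'
  | inr c, inr c' => dC (proj1_sig c) (proj1_sig c')
  | inl b, inr c => M b (proj1_sig c)
  | inr c, inl b => M b (proj1_sig c)
  end.

Lemma M_not0 b (c : C) : (forall a, g a <> c) -> M b c <> Finite 0.
Proof.
  intros Hc E. assert (H : finM b c) by (unfold finM; rewrite E; congruence).
  destruct (MI2 b c H) as [a [[Fb _] [Fc E']]]. rewrite E in E'. injection E'; intro E''.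
  pose proof (dr_nonneg dB HmB b (f a)). pose proof (dr_nonneg dC HmC c (g a)).
  apply (Hc a). symmetry. apply (dr_eq0 dC HmC); auto. lra.
Qed.

Lemma ext_metric_intro {X} (d : X -> X -> Rbar) :
  (forall x y, Rbar_le (Finite 0) (d x y)) -> (forall x, d x x = Finite 0) ->
  (forall x y, d x y = Finite 0 -> x = y) -> (forall x y, d x y = d y x) ->
  (forall x y z, fin d x y -> fin d y z -> fin d x z /\ dr d x z <= dr d x y + dr d y z) ->
  is_ext_metric X d.
Proof.
  intros H0 Hr Hz Hs Ht. split; [auto|split; [|split; [auto|]]].
  - intros x y; split; [apply Hz|intros ->; apply Hr].
  - intros x y z. destruct (classic (fin d x y)) as [F1|F1]; [destruct (classic (fin d y z)) as [F2|F2]|].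
    + destruct (Ht x y z F1 F2) as [F3 T].
      assert (Nm : forall u v, d u v <> m_infty) by (intros u v E; specialize (H0 u v); rewrite E in H0; exact H0).
      unfold fin, dr in *. generalize (Nm x y) (Nm y z) (Nm x z). revert T F1 F2 F3.
      destruct (d x y), (d y z), (d x z); simpl; intros; try congruence; auto.
    + unfold fin in F2. apply NNPP in F2. rewrite F2.
      assert (Nm : d x y <> m_infty) by (intro E; specialize (H0 x y); rewrite E in H0; exact H0).
      destruct (d x y), (d x z); simpl; auto; congruence.
    + unfold fin in F1. apply NNPP in F1. rewrite F1.
      assert (Nm : d y z <> m_infty) by (intro E; specialize (H0 y z); rewrite E in H0; exact H0).
      destruct (d y z), (d x z); simpl; auto; congruence.
Qed.

Lemma HmD : is_ext_metric D dD.
Proof.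
  apply ext_metric_intro.
  - intros [b|c] [b'|c']; simpl; [apply HmB|apply M_ge0|apply M_ge0|apply HmC].
  - intros [b|c]; simpl; [apply (d_refl dB HmB)|apply (d_refl dC HmC)].
  - intros [b|[c pc]] [b'|[c' pc']]; simpl; intro E.
    + f_equal. apply HmB; auto.
    + exfalso. apply (M_not0 b c' pc'); auto.
    + exfalso. apply (M_not0 b' c pc); auto.
    + assert (c = c') by (apply HmC; auto). subst c'. rewrite (proof_irrelevance _ pc pc'). reflexivity.
  - intros [b|c] [b'|c']; simpl; auto; [apply (d_sym dB HmB)|apply (d_sym dC HmC)].
  - intros [b|[c pc]] [b'|[c' pc']] [b''|[c'' pc'']]; unfold fin, dr; simpl; intros F1 F2.
    + assert (F3 : fin dB b b'') by (apply (fin_trans dB HmB _ b'); auto). split; auto. apply (dr_tri dB HmB); auto.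
    + exact (TB1 b b' c'' F1 F2).
    + destruct (TB2 b b'' c' F1 F2) as [F3 T]. split; auto.
    + destruct (TC1 b c'' c' (fin_sym dC HmC _ _ F2) F1) as [F3 T]. split; auto.
      unfold Mr in T. rewrite (dr_sym dC HmC c'' c') in T. unfold dr in T. lra.
    + destruct (TB1 b'' b' c (fin_sym dB HmB _ _ F2) F1) as [F3 T]. split; auto.
      unfold Mr in T. rewrite (dr_sym dB HmB b'' b') in T. unfold dr in T. lra.
    + destruct (TC2 b' c c'' F1 F2) as [F3 T]. split; auto.
    + destruct (TC1 b'' c c' F1 F2) as [F3 T]. split; auto.
    + assert (F3 : fin dC c c'') by (apply (fin_trans dC HmC _ c'); auto). split; auto. apply (dr_tri dC HmC); auto.
Qed.

Definition kC (c : C) : D :=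
  match excluded_middle_informative (exists a, g a = c) with
  | left H => inl (f (proj1_sig (constructive_indefinite_description _ H)))
  | right H => inr (exist _ c (fun a E => H (ex_intro _ a E)))
  end.

Lemma g_inj a a' : g a = g a' -> a = a'.
Proof. intro E. apply HmA. rewrite <- Hg, E. apply (d_refl dC HmC). Qed.

Lemma k_cases c : (exists a, c = g a /\ kC c = inl (f a)) \/ (exists pc, kC c = inr (exist _ c pc)).
Proof.
  unfold kC. destruct (excluded_middle_informative _) as [H|H].
  - left. destruct (constructive_indefinite_description _ H) as [a Ea]. simpl. exists a. auto.
  - right. eexists. reflexivity.
Qed.

Lemma k_g a : kC (g a) = inl (f a).
Proof.
  destruct (k_cases (g a)) as [[a' [E K]]|[pc K]]; rewrite K.
  - apply g_inj in E. subst; auto.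
  - exfalso. apply (pc a); auto.
Qed.

Lemma k_self (c : Cp) : kC (proj1_sig c) = inr c.
Proof.
  destruct c as [c pc]. simpl. destruct (k_cases c) as [[a' [E K]]|[pc' K]]; rewrite K.
  - exfalso. apply (pc a'); auto.
  - rewrite (proof_irrelevance _ pc pc'). auto.
Qed.

Lemma PB_self a : PB (f a) a.
Proof.
  split; [apply fin_refl; auto|]. intros a' F. rewrite (dr_f dA dB f Hf), (dr_f dA dB f Hf), (dr_refl dA HmA). ring.
Qed.

Lemma PC_self a : PC (g a) a.
Proof.
  split; [apply fin_refl; auto|]. intros a' F. rewrite (dr_f dA dC g Hg), (dr_f dA dC g Hg), (dr_refl dA HmA). ring.
Qed.

Lemma M_fa a c : M (f a) c = dC (g a) c.
Proof.
  destruct (classic (fin dC c (g a))) as [F|F].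
  - rewrite (M_formula (f a) c a (PB_self a) F). rewrite (dr_f dA dB f Hf), (dr_refl dA HmA), Rplus_0_l.
    rewrite (d_sym dC HmC). rewrite (d_fin dC HmC); auto.
  - rewrite M_inf. unfold fin in F. apply NNPP in F. rewrite (d_sym dC HmC). auto.
    intros a'' F1 F2. apply F. apply (finCA c a''); auto. apply fin_sym; auto. apply (fin_f dA dB f Hf); auto.
Qed.

Lemma M_ga b a : M b (g a) = dB b (f a).
Proof.
  destruct (classic (fin dB b (f a))) as [F|F].
  - rewrite (M_formula2 b (g a) a (PC_self a) F). rewrite (dr_f dA dC g Hg), (dr_refl dA HmA), Rplus_0_r.
    rewrite (d_fin dB HmB); auto.
  - rewrite M_inf. unfold fin in F. apply NNPP in F. auto.
    intros a'' F1 F2. apply F. apply (finBA b a''); auto. apply fin_sym; auto. apply (fin_f dA dC g Hg); auto.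
Qed.

Lemma dD_inl_k b c : dD (inl b) (kC c) = M b c.
Proof.
  destruct (k_cases c) as [[a [E K]]|[pc K]]; rewrite K; simpl; auto.
  subst c. rewrite M_ga. auto.
Qed.

Lemma k_iso : isometric_embedding C D dC dD kC.
Proof.
  intros c c'.
  destruct (k_cases c) as [[a [E K]]|[pc K]]; destruct (k_cases c') as [[a' [E' K']]|[pc' K']]; rewrite K, K'; simpl.
  - subst. rewrite Hf, Hg. auto.
  - subst. apply M_fa.
  - subst. rewrite M_fa. apply (d_sym dC HmC).
  - auto.
Qed.

Lemma h_iso : isometric_embedding B D dB dD inl.
Proof. intros b b'. reflexivity. Qed.

Lemma hk_comm a : inl (f a) = kC (g a).
Proof. rewrite k_g; auto. Qed.

Definition GW {X} (d : X -> X -> Rbar) y z (phi : R -> X) := phi 0 = y /\ phi (dr d y z) = z /\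
  forall s t, 0 <= s <= dr d y z -> 0 <= t <= dr d y z -> d (phi s) (phi t) = Finite (Rabs (s - t)).

Lemma GW_rev {X} (d : X -> X -> Rbar) (Hm : is_ext_metric X d) y z phi :
  GW d y z phi -> GW d z y (fun t => phi (dr d y z - t)).
Proof.
  intros [H0 [HL Hi]]. unfold GW. rewrite (dr_sym d Hm z y). split; [rewrite Rminus_0_r; auto|]. split; [rewrite Rminus_diag; auto|].
  intros s t Hs Ht. rewrite Hi by lra. f_equal. replace (dr d y z - s - (dr d y z - t)) with (- (s - t)) by ring.
  apply Rabs_Ropp.
Qed.

Lemma GW_concat {X} (d : X -> X -> Rbar) (Hm : is_ext_metric X d) x m y p1 p2 :
  fin d x m -> fin d m y -> dr d x y = dr d x m + dr d m y ->
  GW d x m p1 -> GW d m y p2 -> exists p, GW d x y p.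
Proof.
  intros F1 F2 E [A0 [AL Ai]] [B0 [BL Bi]].
  set (L1 := dr d x m) in *. set (L2 := dr d m y) in *.
  assert (HL1 : 0 <= L1) by apply (dr_nonneg d Hm). assert (HL2 : 0 <= L2) by apply (dr_nonneg d Hm).
  assert (Fxy : fin d x y) by (apply (fin_trans d Hm _ m); auto).
  exists (fun t => if Rle_dec t L1 then p1 t else p2 (t - L1)).
  assert (Mix : forall s t, 0 <= s <= L1 -> L1 < t <= L1 + L2 -> d (p1 s) (p2 (t - L1)) = Finite (Rabs (s - t))).
  { intros s t Hs Ht.
    destruct (fin_of d _ _ _ (Ai s L1 Hs ltac:(lra))) as [G1 D1]. rewrite AL in G1, D1.
    destruct (fin_of d _ _ _ (Bi 0 (t - L1) ltac:(lra) ltac:(lra))) as [G2 D2]. rewrite B0 in G2, D2.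
    destruct (fin_of d _ _ _ (Ai 0 s ltac:(lra) Hs)) as [G3 D3]. rewrite A0 in G3, D3.
    destruct (fin_of d _ _ _ (Bi (t - L1) L2 ltac:(lra) ltac:(lra))) as [G4 D4]. rewrite BL in G4, D4.
    assert (F : fin d (p1 s) (p2 (t - L1))) by (apply (fin_trans d Hm _ m); auto).
    rewrite (d_fin d Hm _ _ F). f_equal.
    assert (U : dr d (p1 s) (p2 (t - L1)) <= dr d (p1 s) m + dr d m (p2 (t - L1))) by (apply (dr_tri d Hm); auto).
    assert (Lo : dr d x y <= dr d x (p1 s) + dr d (p1 s) y).
    { apply (dr_tri d Hm); auto. apply (fin_trans d Hm _ m); auto. }
    assert (Lo2 : dr d (p1 s) y <= dr d (p1 s) (p2 (t - L1)) + dr d (p2 (t - L1)) y) by (apply (dr_tri d Hm); auto).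
    rewrite D1, D2 in U. rewrite D3 in Lo. rewrite D4 in Lo2.
    rewrite (Rabs_left1 (s - t)) by lra. rewrite Rabs_left1 in U by lra. rewrite Rabs_left1 in D4 by lra.
    rewrite Rabs_left1 in Lo by lra. rewrite Rabs_left1 in Lo2 by lra. rewrite (Rabs_left1 (0 - (t - L1))) in U by lra. lra. }
  split; [destruct (Rle_dec 0 L1); [auto|lra]|]. rewrite E. split.
  - destruct (Rle_dec (L1 + L2) L1).
    + assert (L2 = 0) by lra. rewrite H, Rplus_0_r, AL, <- BL, H, B0. auto.
    + replace (L1 + L2 - L1) with L2 by ring. auto.
  - intros s t Hs Ht. destruct (Rle_dec s L1), (Rle_dec t L1).
    + apply Ai; lra.
    + apply Mix; lra.
    + rewrite (d_sym d Hm). rewrite Mix by lra. f_equal. apply Rabs_minus_sym.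
    + rewrite Bi by lra. f_equal. f_equal. ring.
Qed.

Lemma GeoD x0 : Geo dD (fin dD x0).
Proof.
  intros y z Sy Sz. assert (F : fin dD y z) by (apply (Sfin dD HmD x0); auto).
  fold (GW dD y z).
  destruct y as [b|c]; destruct z as [b'|c'].
  - destruct (HgB b b b' (fin_refl dB HmB b) F) as [phi [P0 [PL Pi]]]. exists (fun t => inl (phi t)).
    split; [rewrite P0; auto|]. split; [change (inl (phi (dr dB b b')) = inl b' :> D); rewrite PL; auto|].
    intros s t Hs Ht. apply Pi; auto.
  - unfold fin in F; simpl in F. fold (finM b (proj1_sig c')) in F.
    destruct (MI2 b _ F) as [a [[Fb _] [Fc _]]].
    destruct (PC_ex _ a Fc) as [ga [Fcg Pcg]].
    assert (Fbg : fin dB b (f ga)) by (apply (finBA b a); auto; apply (finCC (proj1_sig c')); auto).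
    pose proof (M_formula2 b (proj1_sig c') ga (conj Fcg Pcg) Fbg) as EM.
    destruct (HgB b b (f ga) (fin_refl dB HmB b) Fbg) as [p1 G1].
    assert (Fgc : fin dC (g ga) (proj1_sig c')) by (apply fin_sym; auto).
    destruct (HgC (g ga) (g ga) (proj1_sig c') (fin_refl dC HmC _) Fgc) as [p2 G2].
    assert (Em : dD (inl (f ga)) (inr c') = dC (g ga) (proj1_sig c')) by (simpl; apply M_fa).
    apply (GW_concat dD HmD (inl b) (inl (f ga)) (inr c') (fun t => inl (p1 t)) (fun t => kC (p2 t))).
    + unfold fin; simpl. auto.
    + unfold fin. rewrite Em. auto.
    + unfold dr at 3. rewrite Em. unfold dr; simpl. rewrite EM. simpl. rewrite (dr_sym dC HmC). auto.
    + destruct G1 as [P0 [PL Pi]]. split; [rewrite P0; auto|]. split; [change (inl (p1 (dr dB b (f ga))) = inl (f ga) :> D); rewrite PL; auto|].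
      intros s t Hs Ht. apply Pi; auto.
    + destruct G2 as [P0 [PL Pi]]. unfold GW. unfold dr at 1 2 3. rewrite Em. fold (dr dC (g ga) (proj1_sig c')).
      split; [rewrite P0, k_g; auto|]. split; [rewrite PL, k_self; auto|].
      intros s t Hs Ht. rewrite k_iso. auto.
  - unfold fin in F; simpl in F. fold (finM b' (proj1_sig c)) in F.
    assert (F' : fin dD (inl b') (inr c)) by (unfold fin; simpl; auto).
    destruct (MI2 b' _ F) as [a [[Fb _] [Fc _]]].
    destruct (PC_ex _ a Fc) as [ga [Fcg Pcg]].
    assert (Fbg : fin dB b' (f ga)) by (apply (finBA b' a); auto; apply (finCC (proj1_sig c)); auto).
    pose proof (M_formula2 b' (proj1_sig c) ga (conj Fcg Pcg) Fbg) as EM.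
    destruct (HgB b' b' (f ga) (fin_refl dB HmB b') Fbg) as [p1 G1].
    assert (Fgc : fin dC (g ga) (proj1_sig c)) by (apply fin_sym; auto).
    destruct (HgC (g ga) (g ga) (proj1_sig c) (fin_refl dC HmC _) Fgc) as [p2 G2].
    assert (Em : dD (inl (f ga)) (inr c) = dC (g ga) (proj1_sig c)) by (simpl; apply M_fa).
    destruct (GW_concat dD HmD (inl b') (inl (f ga)) (inr c) (fun t => inl (p1 t)) (fun t => kC (p2 t))) as [p Hp].
    + unfold fin; simpl. auto.
    + unfold fin. rewrite Em. auto.
    + unfold dr at 3. rewrite Em. unfold dr; simpl. rewrite EM. simpl. rewrite (dr_sym dC HmC). auto.
    + destruct G1 as [P0 [PL Pi]]. split; [rewrite P0; auto|]. split; [change (inl (p1 (dr dB b' (f ga))) = inl (f ga) :> D); rewrite PL; auto|].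
      intros s t Hs Ht. apply Pi; auto.
    + destruct G2 as [P0 [PL Pi]]. unfold GW. unfold dr at 1 2 3. rewrite Em. fold (dr dC (g ga) (proj1_sig c)).
      split; [rewrite P0, k_g; auto|]. split; [rewrite PL, k_self; auto|].
      intros s t Hs Ht. rewrite k_iso. auto.
    + eexists. apply (GW_rev dD HmD). exact Hp.
  - destruct (HgC _ _ _ (fin_refl dC HmC (proj1_sig c)) F) as [phi [P0 [PL Pi]]].
    exists (fun t => kC (phi t)).
    split; [rewrite P0, k_self; auto|]. split; [change (kC (phi (dr dC (proj1_sig c) (proj1_sig c'))) = inr c'); rewrite PL, k_self; auto|].
    intros s t Hs Ht. rewrite k_iso. apply Pi; auto.
Qed.

Lemma FPs_shift P Q R h : FPs P Q R -> FPs (P + h) (Q + h) (R + h).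
Proof. unfold FPs. intros [[?|?] [[?|?] [?|?]]]; repeat split; first [left; lra | right; lra]. Qed.

Ltac fps_close H := unfold FPs in *; destruct H as [[?|?] [[?|?] [?|?]]]; repeat split; first [left; lra | right; lra].

Lemma foot_B b c : finM b c -> exists a, PB b a /\ fin dC c (g a).
Proof. intro H. destruct (MI2 b c H) as [a [P [F _]]]. eauto. Qed.

Lemma FP_BBBC b1 b2 b3 c : fin dB b1 b2 -> fin dB b1 b3 -> finM b1 c -> finM b2 c -> finM b3 c ->
  FPs (dr dB b1 b2 + Mr b3 c) (dr dB b1 b3 + Mr b2 c) (Mr b1 c + dr dB b2 b3).
Proof.
  intros F12 F13 M1 M2 M3.
  destruct (foot_B b1 c M1) as [a [_ Fa]]. destruct (PC_ex c a Fa) as [ga [Fcg Pcg]].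
  assert (Hb : forall b, finM b c -> fin dB b (f ga) /\ Mr b c = dr dB b (f ga) + dr dC c (g ga)).
  { intros b Mb. destruct (foot_B b c Mb) as [ab [[Fb _] Fab]].
    assert (fin dB b (f ga)) by (apply (finBA b ab); auto; apply (finCC c); auto).
    split; auto. unfold Mr. rewrite (M_formula2 b c ga (conj Fcg Pcg)); auto. }
  destruct (Hb b1 M1) as [G1 E1]. destruct (Hb b2 M2) as [G2 E2]. destruct (Hb b3 M3) as [G3 E3].
  pose proof (HfB b1 b1 b2 b3 (f ga) (fin_refl dB HmB b1) F12 F13 G1) as H.
  apply (FPs_shift _ _ _ (dr dC c (g ga))) in H.
  rewrite E1, E2, E3. fps_close H.
Qed.

Lemma FP_BCCC b c1 c2 c3 : fin dC c1 c2 -> fin dC c1 c3 -> finM b c1 -> finM b c2 -> finM b c3 ->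
  FPs (Mr b c1 + dr dC c2 c3) (Mr b c2 + dr dC c1 c3) (Mr b c3 + dr dC c1 c2).
Proof.
  intros F12 F13 M1 M2 M3.
  destruct (foot_B b c1 M1) as [ba [[Fbf Pbf] Fa]].
  assert (Hc : forall c, finM b c -> fin dC c (g ba) /\ Mr b c = dr dB b (f ba) + dr dC c (g ba)).
  { intros c Mc. destruct (foot_B b c Mc) as [ac [[Fb _] Fac]].
    assert (fin dC c (g ba)) by (apply (finCA c ac); auto; apply (finBB b); auto).
    split; auto. unfold Mr. rewrite (M_formula b c ba (conj Fbf Pbf)); auto. }
  destruct (Hc c1 M1) as [G1 E1]. destruct (Hc c2 M2) as [G2 E2]. destruct (Hc c3 M3) as [G3 E3].
  assert (G1' : fin dC c1 (g ba)) by auto.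
  pose proof (HfC c1 (g ba) c1 c2 c3 G1' (fin_refl dC HmC c1) F12 F13) as H.
  apply (FPs_shift _ _ _ (dr dB b (f ba))) in H.
  rewrite E1, E2, E3.
  pose proof (dr_sym dC HmC (g ba) c1). pose proof (dr_sym dC HmC (g ba) c2). pose proof (dr_sym dC HmC (g ba) c3).
  fps_close H.
Qed.

Lemma FP_BBCC b1 b2 c1 c2 : fin dB b1 b2 -> fin dC c1 c2 ->
  finM b1 c1 -> finM b1 c2 -> finM b2 c1 -> finM b2 c2 ->
  FPs (dr dB b1 b2 + dr dC c1 c2) (Mr b1 c1 + Mr b2 c2) (Mr b1 c2 + Mr b2 c1).
Proof.
  intros Fb Fc M11 M12 M21 M22.
  destruct (foot_B b1 c1 M11) as [a [[Fa _] Fa']].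
  assert (Fb2 : fin dB b2 (f a)) by (apply (fin_trans dB HmB _ b1); auto; apply fin_sym; auto).
  assert (Fc2 : fin dC c2 (g a)) by (apply (fin_trans dC HmC _ c1); auto; apply fin_sym; auto).
  destruct (PB_ex b1 a Fa) as [be1 [Gb1 Pb1]]. destruct (PB_ex b2 a Fb2) as [be2 [Gb2 Pb2]].
  destruct (PC_ex c1 a Fa') as [ga1 [Gc1 Pc1]]. destruct (PC_ex c2 a Fc2) as [ga2 [Gc2 Pc2]].
  assert (A1 : fin dA a be1) by (apply (finBB b1); auto).
  assert (A2 : fin dA a be2) by (apply (finBB b2); auto).
  assert (A3 : fin dA a ga1) by (apply (finCC c1); auto).
  assert (A4 : fin dA a ga2) by (apply (finCC c2); auto).
  assert (FA : forall x y, fin dA a x -> fin dA a y -> fin dA x y) by (intros; apply (fin_trans dA HmA _ a); auto; apply fin_sym; auto).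
  assert (Form : forall b c be ga, PB b be -> PC c ga -> fin dA a be -> fin dA a ga ->
             Mr b c = dr dB b (f be) + dr dC c (g ga) + dr dA be ga).
  { intros b c be ga [Fbe Pbe] [Fga Pga] Hbe Hga. unfold Mr.
    rewrite (M_formula b c be (conj Fbe Pbe)). simpl. rewrite (Pga be (FA _ _ Hga Hbe)).
    rewrite (dr_sym dA HmA ga be). ring. apply (finCA c ga); auto. }
  assert (E11 := Form b1 c1 be1 ga1 (conj Gb1 Pb1) (conj Gc1 Pc1) A1 A3).
  assert (E12 := Form b1 c2 be1 ga2 (conj Gb1 Pb1) (conj Gc2 Pc2) A1 A4).
  assert (E21 := Form b2 c1 be2 ga1 (conj Gb2 Pb2) (conj Gc1 Pc1) A2 A3).
  assert (E22 := Form b2 c2 be2 ga2 (conj Gb2 Pb2) (conj Gc2 Pc2) A2 A4).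
  rewrite E11, E12, E21, E22.
  assert (LB : dr dB b1 b2 <= dr dB b1 (f be1) + dr dB b2 (f be2) + dr dA be1 be2 /\
               (dr dB b1 b2 = dr dB b1 (f be1) + dr dB b2 (f be2) + dr dA be1 be2 \/ dr dA be1 be2 = 0)).
  { assert (G12 : fin dB b1 (f be2)) by (apply (finBA b1 be1); auto).
    pose proof (HfB b1 b1 b2 (f be1) (f be2) (fin_refl dB HmB b1) Fb Gb1 G12) as H.
    rewrite (Pb1 be2 (FA _ _ A1 A2)) in H.
    rewrite (Pb2 be1 (FA _ _ A2 A1)) in H.
    rewrite (dr_f dA dB f Hf) in H. rewrite (dr_sym dA HmA be2 be1) in H.
    assert (T : dr dB b1 b2 <= dr dB b1 (f be2) + dr dB (f be2) b2).
    { apply (dr_tri dB HmB); auto. apply fin_sym; auto. }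
    rewrite (Pb1 be2 (FA _ _ A1 A2)), (dr_sym dB HmB (f be2) b2) in T.
    pose proof (dr_nonneg dA HmA be1 be2).
    destruct H as [_ [_ [H|H]]]; (split; [lra|]); [left|right]; lra. }
  assert (LC : dr dC c1 c2 <= dr dC c1 (g ga1) + dr dC c2 (g ga2) + dr dA ga1 ga2 /\
               (dr dC c1 c2 = dr dC c1 (g ga1) + dr dC c2 (g ga2) + dr dA ga1 ga2 \/ dr dA ga1 ga2 = 0)).
  { assert (G12 : fin dC c1 (g ga2)) by (apply (finCA c1 ga1); auto).
    pose proof (HfC c1 c1 c2 (g ga1) (g ga2) (fin_refl dC HmC c1) Fc Gc1 G12) as H.
    rewrite (Pc1 ga2 (FA _ _ A3 A4)) in H.
    rewrite (Pc2 ga1 (FA _ _ A4 A3)) in H.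
    rewrite (dr_f dA dC g Hg) in H. rewrite (dr_sym dA HmA ga2 ga1) in H.
    assert (T : dr dC c1 c2 <= dr dC c1 (g ga2) + dr dC (g ga2) c2).
    { apply (dr_tri dC HmC); auto. apply fin_sym; auto. }
    rewrite (Pc1 ga2 (FA _ _ A3 A4)), (dr_sym dC HmC (g ga2) c2) in T.
    pose proof (dr_nonneg dA HmA ga1 ga2).
    destruct H as [_ [_ [H|H]]]; (split; [lra|]); [left|right]; lra. }
  pose proof (HfA a be1 be2 ga1 ga2 A1 A2 A3 A4) as HA.
  assert (T1 : dr dA be1 ga1 <= dr dA be1 be2 + dr dA be2 ga1) by (apply (dr_tri dA HmA); auto).
  assert (T2 : dr dA be2 ga1 <= dr dA be2 be1 + dr dA be1 ga1) by (apply (dr_tri dA HmA); auto).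
  assert (T3 : dr dA be1 ga2 <= dr dA be1 be2 + dr dA be2 ga2) by (apply (dr_tri dA HmA); auto).
  assert (T4 : dr dA be2 ga2 <= dr dA be2 be1 + dr dA be1 ga2) by (apply (dr_tri dA HmA); auto).
  assert (T5 : dr dA be1 ga1 <= dr dA be1 ga2 + dr dA ga2 ga1) by (apply (dr_tri dA HmA); auto).
  assert (T6 : dr dA be1 ga2 <= dr dA be1 ga1 + dr dA ga1 ga2) by (apply (dr_tri dA HmA); auto).
  assert (T7 : dr dA be2 ga1 <= dr dA be2 ga2 + dr dA ga2 ga1) by (apply (dr_tri dA HmA); auto).
  assert (T8 : dr dA be2 ga2 <= dr dA be2 ga1 + dr dA ga1 ga2) by (apply (dr_tri dA HmA); auto).
  rewrite (dr_sym dA HmA be2 be1) in *. rewrite (dr_sym dA HmA ga2 ga1) in *.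
  pose proof (dr_nonneg dA HmA be1 be2). pose proof (dr_nonneg dA HmA ga1 ga2).
  destruct LB as [LB1 LB2]. destruct LC as [LC1 LC2].
  unfold FPs in *. destruct HA as [[?|?] [[?|?] [?|?]]]; destruct LB2; destruct LC2;
  repeat split; first [left; lra | right; lra].
Qed.

Ltac fpd_fin H := repeat match type of H with
  | ?P -> _ => let h := fresh in assert (h : P) by (unfold finM; match goal with hh : fin dD _ _ |- _ => exact hh end); specialize (H h); clear h
  end.
Ltac fpd_close H := unfold Mr, dr in *; simpl in *; fps_close H.

Lemma FPD x0 : FP dD (fin dD x0).
Proof.
  intros x y z w Sx Sy Sz Sw.
  assert (FF : forall p q, fin dD x0 p -> fin dD x0 q -> fin dD p q) by (intros; apply (Sfin dD HmD x0); auto).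
  pose proof (FF x y Sx Sy) as Fxy. pose proof (FF y x Sy Sx) as Fyx.
  pose proof (FF x z Sx Sz) as Fxz. pose proof (FF z x Sz Sx) as Fzx.
  pose proof (FF x w Sx Sw) as Fxw. pose proof (FF w x Sw Sx) as Fwx.
  pose proof (FF y z Sy Sz) as Fyz. pose proof (FF z y Sz Sy) as Fzy.
  pose proof (FF y w Sy Sw) as Fyw. pose proof (FF w y Sw Sy) as Fwy.
  pose proof (FF z w Sz Sw) as Fzw. pose proof (FF w z Sw Sz) as Fwz.
  pose proof (dr_sym dD HmD x y). pose proof (dr_sym dD HmD x z). pose proof (dr_sym dD HmD x w).
  pose proof (dr_sym dD HmD y z). pose proof (dr_sym dD HmD y w). pose proof (dr_sym dD HmD z w).
  clear FF.
  destruct x as [bbx|ccx]; destruct y as [bby|ccy]; destruct z as [bbz|ccz]; destruct w as [bbw|ccw].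
  - pose proof (HfB bbx bbx bby bbz bbw (fin_refl dB HmB bbx)) as HH; fpd_fin HH; fpd_close HH.
  - pose proof (FP_BBBC bbx bby bbz (proj1_sig ccw)) as HH; fpd_fin HH; fpd_close HH.
  - pose proof (FP_BBBC bbx bby bbw (proj1_sig ccz)) as HH; fpd_fin HH; fpd_close HH.
  - pose proof (FP_BBCC bbx bby (proj1_sig ccz) (proj1_sig ccw)) as HH; fpd_fin HH; fpd_close HH.
  - pose proof (FP_BBBC bbx bbz bbw (proj1_sig ccy)) as HH; fpd_fin HH; fpd_close HH.
  - pose proof (FP_BBCC bbx bbz (proj1_sig ccy) (proj1_sig ccw)) as HH; fpd_fin HH; fpd_close HH.
  - pose proof (FP_BBCC bbx bbw (proj1_sig ccy) (proj1_sig ccz)) as HH; fpd_fin HH; fpd_close HH.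
  - pose proof (FP_BCCC bbx (proj1_sig ccy) (proj1_sig ccz) (proj1_sig ccw)) as HH; fpd_fin HH; fpd_close HH.
  - pose proof (FP_BBBC bby bbz bbw (proj1_sig ccx)) as HH; fpd_fin HH; fpd_close HH.
  - pose proof (FP_BBCC bby bbz (proj1_sig ccx) (proj1_sig ccw)) as HH; fpd_fin HH; fpd_close HH.
  - pose proof (FP_BBCC bby bbw (proj1_sig ccx) (proj1_sig ccz)) as HH; fpd_fin HH; fpd_close HH.
  - pose proof (FP_BCCC bby (proj1_sig ccx) (proj1_sig ccz) (proj1_sig ccw)) as HH; fpd_fin HH; fpd_close HH.
  - pose proof (FP_BBCC bbz bbw (proj1_sig ccx) (proj1_sig ccy)) as HH; fpd_fin HH; fpd_close HH.
  - pose proof (FP_BCCC bbz (proj1_sig ccx) (proj1_sig ccy) (proj1_sig ccw)) as HH; fpd_fin HH; fpd_close HH.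
  - pose proof (FP_BCCC bbw (proj1_sig ccx) (proj1_sig ccy) (proj1_sig ccz)) as HH; fpd_fin HH; fpd_close HH.
  - pose proof (HfC (proj1_sig ccx) (proj1_sig ccx) (proj1_sig ccy) (proj1_sig ccz) (proj1_sig ccw) (fin_refl dC HmC (proj1_sig ccx))) as HH; fpd_fin HH; fpd_close HH.
Qed.

Lemma lt_fin2 {X} (d : X -> X -> Rbar) (Hm : is_ext_metric X d) x y e :
  Rbar_lt (d x y) (Finite e) -> fin d x y /\ dr d x y < e.
Proof. intro H. assert (F : fin d x y) by (intro E; rewrite E in H; exact H). split; auto.
  apply (lt_fin d Hm); auto. Qed.

Definition FT (x : D) a := match x with inl b => PB b a | inr c => PC (proj1_sig c) a end.
Definition ht (x : D) a := match x with inl b => dr dB b (f a) | inr c => dr dC (proj1_sig c) (g a) end.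
Definition opp (x y : D) := match x, y with inl _, inr _ => True | inr _, inl _ => True | _, _ => False end.

Lemma OPP x y a a' : opp x y -> fin dD x y -> FT x a -> FT y a' ->
  fin dA a a' /\ dr dD x y = ht x a + ht y a' + dr dA a a'.
Proof.
  assert (Key : forall b c a a', finM b c -> PB b a -> PC c a' ->
      fin dA a a' /\ Mr b c = dr dB b (f a) + dr dC c (g a') + dr dA a a').
  { intros b c a1 a2 H [F1 P1] [F2 P2].
    destruct (MI2 b c H) as [a0 [[F0 _] [F0' _]]].
    assert (Faa : fin dA a1 a2) by (apply (fin_trans dA HmA _ a0); [apply (finBB b)|apply (finCC c)]; auto).
    split; auto. unfold Mr. rewrite (M_formula b c a1 (conj F1 P1)); [|apply (finCA c a2); auto; apply fin_sym; auto].
    simpl. rewrite (P2 a1 (fin_sym dA HmA _ _ Faa)). rewrite (dr_sym dA HmA a2 a1). ring. }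
  destruct x as [b|c]; destruct y as [b'|c']; simpl; try tauto; intros _ F P P'.
  - apply Key; auto.
  - destruct (Key b' (proj1_sig c) a' a) as [K1 K2]; auto. split; [apply fin_sym; auto|].
    change (dr dD (inr c) (inl b')) with (Mr b' (proj1_sig c)). rewrite K2. rewrite (dr_sym dA HmA a' a). ring.
Qed.

Lemma foot_ex x y : opp x y -> fin dD x y -> exists a, FT x a.
Proof.
  destruct x as [b|c]; destruct y as [b'|c']; simpl; try tauto; intros _ F.
  - destruct (MI2 b _ F) as [a [P _]]. eauto.
  - destruct (MI2 b' _ F) as [a [_ [Fc _]]]. apply (PC_ex _ a). apply Fc.
Qed.

Lemma ht_ge0 x a : 0 <= ht x a.
Proof. destruct x; simpl; apply dr_nonneg; auto. Qed.

Lemma HcD : complete_on D dD (fun _ => True).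
Proof.
  intros u _ Hcau.
  assert (Cau : forall eps, 0 < eps -> exists N, forall n m, (N <= n)%nat -> (N <= m)%nat ->
                  fin dD (u n) (u m) /\ dr dD (u n) (u m) < eps).
  { intros eps He. destruct (Hcau eps He) as [N HN]. exists N. intros. apply (lt_fin2 dD HmD). auto. }
  destruct (classic (exists N, forall n, (N <= n)%nat -> exists b, u n = inl b)) as [[N HN]|HnB].
  { destruct (HN N (le_n N)) as [b0 _].
    set (ub := fun n => match u n with inl b => b | inr _ => b0 end).
    assert (Eu : forall n, (N <= n)%nat -> u n = inl (ub n)).
    { intros n Hn. destruct (HN n Hn) as [b E]. unfold ub. rewrite E. auto. }
    destruct (HcB ub (fun _ => I)) as [l [_ Hl]].
    { intros eps He. destruct (Hcau eps He) as [N1 HN1]. exists (Nat.max N N1). intros n m Hn Hm.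
      pose proof (HN1 n m ltac:(lia) ltac:(lia)). rewrite (Eu n), (Eu m) in H by lia. exact H. }
    exists (inl l). split; auto. intros eps He. destruct (Hl eps He) as [N2 HN2]. exists (Nat.max N N2).
    intros n Hn. rewrite (Eu n) by lia. apply HN2. lia. }
  destruct (classic (exists N, forall n, (N <= n)%nat -> exists c, u n = inr c)) as [[N HN]|HnC].
  { destruct (HN N (le_n N)) as [c0 _].
    set (uc := fun n => match u n with inr c => proj1_sig c | inl _ => proj1_sig c0 end).
    assert (Eu : forall n, (N <= n)%nat -> u n = kC (uc n)).
    { intros n Hn. destruct (HN n Hn) as [c E]. unfold uc. rewrite E, k_self. auto. }
    destruct (HcC uc (fun _ => I)) as [l [_ Hl]].
    { intros eps He. destruct (Hcau eps He) as [N1 HN1]. exists (Nat.max N N1). intros n m Hn Hm.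
      pose proof (HN1 n m ltac:(lia) ltac:(lia)). rewrite (Eu n), (Eu m), k_iso in H by lia. exact H. }
    exists (kC l). split; auto. intros eps He. destruct (Hl eps He) as [N2 HN2]. exists (Nat.max N N2).
    intros n Hn. rewrite (Eu n) by lia. rewrite k_iso. apply HN2. lia. }
  assert (Opp : forall n N, exists k, (N <= k)%nat /\ opp (u n) (u k)).
  { intros n N. destruct (u n) as [b|c] eqn:En.
    - apply NNPP. intro Hn. apply HnB. exists N. intros k Hk. destruct (u k) as [b'|c'] eqn:Ek; eauto.
      exfalso. apply Hn. exists k. rewrite Ek. simpl. auto.
    - apply NNPP. intro Hn. apply HnC. exists N. intros k Hk. destruct (u k) as [b'|c'] eqn:Ek; eauto.
      exfalso. apply Hn. exists k. rewrite Ek. simpl. auto. }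
  destruct (Cau 1 Rlt_0_1) as [N1 HN1].
  assert (Fex : forall n, (N1 <= n)%nat -> exists a, FT (u n) a).
  { intros n Hn. destruct (Opp n N1) as [k [Hk Ok]]. apply (foot_ex (u n) (u k)); auto. apply HN1; auto. }
  destruct (Fex N1 (le_n _)) as [adef _].
  set (w := fun n => match excluded_middle_informative (exists a, FT (u n) a) with
                     | left H => proj1_sig (constructive_indefinite_description _ H) | right _ => adef end).
  assert (Hw : forall n, (N1 <= n)%nat -> FT (u n) (w n)).
  { intros n Hn. unfold w. destruct (excluded_middle_informative _) as [H|H].
    - destruct (constructive_indefinite_description _ H); simpl; auto.
    - exfalso; apply H; auto. }
  clearbody w.
  assert (Est : forall n k, (N1 <= n)%nat -> (N1 <= k)%nat -> opp (u n) (u k) -> fin dD (u n) (u k) ->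
            fin dA (w n) (w k) /\ dr dA (w n) (w k) <= dr dD (u n) (u k) /\ ht (u n) (w n) <= dr dD (u n) (u k)).
  { intros n k Hn Hk O F. destruct (OPP _ _ (w n) (w k) O F (Hw n Hn) (Hw k Hk)) as [F' E].
    pose proof (ht_ge0 (u n) (w n)). pose proof (ht_ge0 (u k) (w k)). split; auto. pose proof (dr_nonneg dA HmA (w n) (w k)) as H1. rewrite E. split; clear -H H0 H1; lra. }
  destruct (HcA w (fun _ => I)) as [astar [_ Hconv]].
  { intros eps He. destruct (Cau (eps/2) ltac:(lra)) as [N2 HN2]. exists (Nat.max N1 N2). intros n m Hn Hm.
    destruct (Opp n (Nat.max N1 N2)) as [k [Hk Ok]].
    destruct (HN2 n k ltac:(lia) ltac:(lia)) as [Fnk Dnk].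
    destruct (Est n k ltac:(lia) ltac:(lia) Ok Fnk) as [A1 [A2 _]].
    apply (lt_fin dA HmA).
    - destruct (classic (opp (u m) (u k))) as [Omk|Omk].
      + destruct (HN2 m k ltac:(lia) ltac:(lia)) as [Fmk _].
        destruct (Est m k ltac:(lia) ltac:(lia) Omk Fmk) as [B1 _].
        apply (fin_trans dA HmA _ (w k)); auto. apply fin_sym; auto.
      + assert (Onm : opp (u n) (u m)) by (revert Ok Omk; destruct (u n), (u m), (u k); simpl; tauto).
        destruct (HN2 n m ltac:(lia) ltac:(lia)) as [Fnm _]. apply (Est n m); auto; lia.
    - destruct (classic (opp (u m) (u k))) as [Omk|Omk].
      + destruct (HN2 m k ltac:(lia) ltac:(lia)) as [Fmk Dmk].
        destruct (Est m k ltac:(lia) ltac:(lia) Omk Fmk) as [B1 [B2 _]].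
        assert (dr dA (w n) (w m) <= dr dA (w n) (w k) + dr dA (w k) (w m)).
        { apply (dr_tri dA HmA); auto. apply fin_sym; auto. }
        rewrite (dr_sym dA HmA (w k) (w m)) in H. lra.
      + assert (Onm : opp (u n) (u m)) by (revert Ok Omk; destruct (u n), (u m), (u k); simpl; tauto).
        destruct (HN2 n m ltac:(lia) ltac:(lia)) as [Fnm Dnm].
        destruct (Est n m ltac:(lia) ltac:(lia) Onm Fnm) as [_ [C2 _]]. lra. }
  exists (inl (f astar)). split; auto. intros eps He.
  destruct (Cau (eps/2) ltac:(lra)) as [N2 HN2]. destruct (Hconv (eps/2) ltac:(lra)) as [N3 HN3].
  exists (Nat.max N1 (Nat.max N2 N3)). intros n Hn.
  destruct (Opp n (Nat.max N1 (Nat.max N2 N3))) as [k [Hk Ok]].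
  destruct (HN2 n k ltac:(lia) ltac:(lia)) as [Fnk Dnk].
  destruct (Est n k ltac:(lia) ltac:(lia) Ok Fnk) as [_ [_ Hht]].
  destruct (lt_fin2 dA HmA _ _ _ (HN3 n ltac:(lia))) as [Fwa Dwa].
  pose proof (Hw n ltac:(lia)) as FTn.
  destruct (u n) as [b|c]; simpl in *.
  - destruct FTn as [Fb Pb].
    assert (Fba : fin dB b (f astar)) by (apply (finBA b (w n)); auto).
    rewrite (d_fin dB HmB _ _ Fba). simpl. rewrite (Pb astar Fwa). lra.
  - destruct FTn as [Fc Pc]. rewrite M_fa.
    assert (Fca : fin dC (proj1_sig c) (g astar)) by (apply (finCA _ (w n)); auto).
    rewrite (d_sym dC HmC), (d_fin dC HmC _ _ Fca). simpl. rewrite (Pc astar Fwa). lra.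
Qed.

Lemma AP_main : exists (DD : Type) (dd : DD -> DD -> Rbar) (h : B -> DD) (k : C -> DD),
  is_Rforest DD dd /\ isometric_embedding B DD dB dd h /\ isometric_embedding C DD dC dd k /\
  (forall a, h (f a) = k (g a)).
Proof.
  exists D, dD, inl, kC. split; [|split; [exact h_iso|split; [exact k_iso|exact hk_comm]]].
  split; [exact HmD|]. split; [exact HcD|]. intro x0. apply T1; [exact HmD|exact HcD|apply GeoD|apply FPD].
Qed.
End AP.

Lemma AP_RF {A} (dA : A -> A -> Rbar) {B} (dB : B -> B -> Rbar) {C} (dC : C -> C -> Rbar) f g :
  is_Rforest A dA -> is_Rforest B dB -> is_Rforest C dC ->
  isometric_embedding A B dA dB f -> isometric_embedding A C dA dC g ->
  exists (DD : Type) (dd : DD -> DD -> Rbar) (h : B -> DD) (k : C -> DD),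
  is_Rforest DD dd /\ isometric_embedding B DD dB dd h /\ isometric_embedding C DD dC dd k /\
  (forall a, h (f a) = k (g a)).
Proof.
  intros RA RB RC Hf Hg.
  pose proof (RF_props dA RA) as PA. pose proof (RF_props dB RB) as PB'. pose proof (RF_props dC RC) as PC'.
  destruct RA as [HmA [HcA _]]. destruct RB as [HmB [HcB _]]. destruct RC as [HmC [HcC _]].
  apply (AP_main dA HmA HcA (fun x => proj1 (PA x)) (fun x => proj2 (PA x))
                 dB HmB HcB (fun x => proj1 (PB' x)) (fun x => proj2 (PB' x))
                 dC HmC HcC (fun x => proj1 (PC' x)) (fun x => proj2 (PC' x)) f g Hf Hg).
Qed.

Theorem proposition2p7 :
  (* joint embedding property *)
  (forall (X : Type) (dX : X -> X -> Rbar) (Y : Type) (dY : Y -> Y -> Rbar),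
     is_Rforest X dX -> is_Rforest Y dY ->
     exists (Z : Type) (dZ : Z -> Z -> Rbar) (f : X -> Z) (g : Y -> Z),
       is_Rforest Z dZ /\
       isometric_embedding X Z dX dZ f /\ isometric_embedding Y Z dY dZ g) /\
  (* amalgamation property *)
  (forall (A : Type) (dA : A -> A -> Rbar) (B : Type) (dB : B -> B -> Rbar)
          (C : Type) (dC : C -> C -> Rbar) (f : A -> B) (g : A -> C),
     is_Rforest A dA -> is_Rforest B dB -> is_Rforest C dC ->
     isometric_embedding A B dA dB f -> isometric_embedding A C dA dC g ->
     exists (D : Type) (dD : D -> D -> Rbar) (h : B -> D) (k : C -> D),
       is_Rforest D dD /\
       isometric_embedding B D dB dD h /\ isometric_embedding C D dC dD k /\
       (forall a : A, h (f a) = k (g a))).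
Proof.
  split.
  - intros X dX Y dY RX RY.
    assert (RE : is_Rforest Empty_set (fun _ _ => Finite 0)).
    { split; [|split].
      - split; [intros []|split; [intros []|split; intros []]].
      - intros u. destruct (u 0%nat).
      - intros []. }
    destruct (AP_RF (fun _ _ : Empty_set => Finite 0) dX dY (fun e => match e with end) (fun e => match e with end)
                RE RX RY (fun e => match e with end) (fun e => match e with end)) as [Z [dZ [h [k [H1 [H2 [H3 _]]]]]]].
    exists Z, dZ, h, k. auto.
  - intros A dA B dB C dC f g RA RB RC Hf Hg. apply (AP_RF dA dB dC f g); auto.
Qed.
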